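(* Let $V$ be a $p$-dimensional real vector space, $\Lambda\subset V$ a full lattice, and $X=\bigcup_{\alpha\in\mathfrak I}X_\alpha\subset V$ an ordered $p$-complex which is a $\Lambda$-complex. Let $M_1<M_2$ be integers, $\widehat\Lambda:=\Lambda\times(M_2-M_1)\mathbb Z\subset V\times\mathbb R$, and $\omega:V\to\mathbb R$ linear. Then the ordered $(p+1)$-complex $Y=Y(X,\omega,[M_1,M_2])=\bigcup_{\gamma\in J}Y_\gamma\subset V\times\mathbb R$ is a $\widehat\Lambda$-complex. Moreover, defining $\Omega:V\times\mathbb R\to\mathbb R$ by $\Omega(s\times t)=\omega(s)+t$, for every $\gamma=(\alpha,v,\ell)\in J$ and every $\kappa\in Y_\gamma$, $$A(v)+\ell-1\le\Omega(\kappa)\le A(v)+\ell.$$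
   Context: Ordered complexes: an ordered $p$-complex in a $p$-dimensional real vector space $V$ is a family $X=\bigcup_{\alpha\in\mathfrak I}X_\alpha$ of $p$-simplices $X_\alpha\subset V$ (convex hulls of $p+1$ affinely independent points, vertex set $\mathrm{Vt}(X_\alpha)$), each with a total order $\prec_\alpha$ on $\mathrm{Vt}(X_\alpha)$; $[s_1,\dots,s_t]$ denotes a convex hull. For $x$ in a simplex $S$, $\mathrm{SpVt}(x)$ (spanning vertices) is the set of vertices of $S$ whose barycentric coordinate in $x$ is positive. $\Lambda$-complex: $X$ is a $\Lambda$-complex if (i) for all $\alpha,\beta$, $X_\alpha\cap X_\beta$ is empty or equals the convex hull of $\mathrm{Vt}(X_\alpha)\cap\mathrm{Vt}(X_\beta)$; (ii) for $v,w\in\mathrm{Vt}(X_\alpha)\cap\mathrm{Vt}(X_\beta)$, $v\prec_\alpha w\iff v\prec_\beta w$; (iii) if $v,w\in\mathrm{Vt}(X_\alpha)$, $\lambda\in\Lambda$ and $v+\lambda,w+\lambda\in\mathrm{Vt}(X_{\alpha'})$, then $v\prec_\alpha w\iff v+\lambda\prec_{\alpha'}w+\lambda$; (iv) the quotient map $V\to V/\Lambda$ restricted to $X$ is surjective and is injective on the union of the interiors of the $X_\alpha$; (v) if $x,x'\in X$, $\lambda\in\Lambda$, $x'=x+\lambda$, then $\mathrm{SpVt}(x')=\mathrm{SpVt}(x)+\lambda$ (by (i), $\mathrm{SpVt}(x)$ does not depend on the simplex containing $x$). Construction $Y(X,\omega,[M_1,M_2])$: let $A:V\to(0,1]$ be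 defined by $A(u)-\omega(u)\in\mathbb Z$, $0<A(u)\le1$, and put $a(u):=A(u)-\omega(u)\in\mathbb Z$. Define the order $\prec_\alpha^A$ on $\mathrm{Vt}(X_\alpha)$: $u\prec_\alpha^A u'$ iff $A(u)<A(u')$, or $A(u)=A(u')$ and $u\prec_\alpha u'$. Let $J=\{(\alpha,v,\ell):\alpha\in\mathfrak I,\ v\in\mathrm{Vt}(X_\alpha),\ \ell\in\mathbb Z,\ M_1\le\ell<M_2\}$. For $\gamma=(\alpha,v,\ell)\in J$, list $\mathrm{Vt}(X_\alpha)$ as $v_0\prec_\alpha^A\cdots\prec_\alpha^A v_p$ with $v=v_j$, and set $$Y_\gamma=[v_0\times(a(v_0)+\ell),\dots,v_j\times(a(v_j)+\ell),\ v_j\times(a(v_j)+\ell-1),\ v_{j+1}\times(a(v_{j+1})+\ell-1),\dots,v_p\times(a(v_p)+\ell-1)]\subset V\times\mathbb R,$$ ordered by: $\rho\prec_\gamma\rho'$ iff $\pi_V(\rho)\prec_\alpha\pi_V(\rho')$, or $\pi_V(\rho)=\pi_V(\rho')$ and $\pi_{\mathbb R}(\rho')<\pi_{\mathbb R}(\rho)$ ($\pi_V,\pi_{\mathbb R}$ the projections). Then $Y(X,\omega,[M_1,M_2]):=\bigcup_{\gamma\in J}Y_\gamma$. *)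

(* Defs.v *)
From Stdlib Require Import Reals List ZArith Classical ClassicalEpsilon FunctionalExtensionality.
From Stdlib Require Vectors.Fin.
Import ListNotations.
Open Scope R_scope.

(** A concrete real vector space: carrier, operations, and the "coordinatewise
    eps-close" relation used to define topological interiors. *)
Record RVS := mkRVS {
  car :> Type;
  vadd : car -> car -> car;
  vscale : R -> car -> car;
  vzero : car;
  vclose : R -> car -> car -> Prop
}.

Definition Rn (p : nat) : RVS :=
  mkRVS (Fin.t p -> R)
    (fun x y i => x i + y i) (fun c x i => c * x i) (fun _ => 0)
    (fun e x y => forall i, Rabs (x i - y i) < e).

Definition RnR (p : nat) : RVS :=
  mkRVS ((Fin.t p -> R) * R)
    (fun x y => (fun i => fst x i + fst y i, snd x + snd y))
    (fun c x => (fun i => c * fst x i, c * snd x))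
    (fun _ => 0, 0)
    (fun e x y => (forall i, Rabs (fst x i - fst y i) < e) /\ Rabs (snd x - snd y) < e).

Section Generic.
Variable E : RVS.

Fixpoint lc (cs : list R) (L : list E) : E :=
  match cs, L with
  | c :: cs', v :: L' => vadd E (vscale E c v) (lc cs' L')
  | _, _ => vzero E
  end.

Definition sumR (cs : list R) : R := fold_right Rplus 0 cs.

Definition bary (L : list E) (cs : list R) (x : E) : Prop :=
  length cs = length L /\ Forall (fun c => 0 <= c) cs /\ sumR cs = 1 /\ x = lc cs L.

Definition conv (L : list E) (x : E) : Prop := exists cs, bary L cs x.

Definition convP (P : E -> Prop) (x : E) : Prop :=
  exists L, Forall P L /\ conv L x.

Definition aff_indep (L : list E) : Prop :=
  forall cs, length cs = length L -> sumR cs = 0 -> lc cs L = vzero E ->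
    Forall (fun c => c = 0) cs.

Definition lin_indep (L : list E) : Prop :=
  forall cs, length cs = length L -> lc cs L = vzero E -> Forall (fun c => c = 0) cs.

(** An ordered q-simplex is encoded by the list of its q+1 affinely independent
    vertices, listed in increasing order; the simplex itself is [conv L]. *)
Definition is_simplex (q : nat) (L : list E) : Prop :=
  length L = S q /\ NoDup L /\ aff_indep L.

Definition prec (L : list E) (v w : E) : Prop :=
  exists i j, (i < j)%nat /\ nth_error L i = Some v /\ nth_error L j = Some w.

Definition SpVt (L : list E) (x w : E) : Prop :=
  exists cs i c, bary L cs x /\ nth_error L i = Some w /\ nth_error cs i = Some c /\ 0 < c.

Definition interior (L : list E) (x : E) : Prop :=
  exists e, 0 < e /\ forall y, vclose E e x y -> conv L y.

Definition ordered_complex (q : nat) {I : Type} (X : I -> list E) : Prop :=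
  forall a, is_simplex q (X a).

Definition inX {I : Type} (X : I -> list E) (x : E) : Prop := exists a, conv (X a) x.

Definition Lambda_complex (Lam : E -> Prop) {I : Type} (X : I -> list E) : Prop :=
  (forall a b,
     (forall x, ~ (conv (X a) x /\ conv (X b) x)) \/
     (forall x, (conv (X a) x /\ conv (X b) x) <->
                convP (fun v => In v (X a) /\ In v (X b)) x)) /\
  (forall a b v w, In v (X a) -> In w (X a) -> In v (X b) -> In w (X b) ->
     (prec (X a) v w <-> prec (X b) v w)) /\
  (forall a a' v w l, Lam l -> In v (X a) -> In w (X a) ->
     In (vadd E v l) (X a') -> In (vadd E w l) (X a') ->
     (prec (X a) v w <-> prec (X a') (vadd E v l) (vadd E w l))) /\
  (* (iv) surjectivity of V -> V/Lam on X *)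
  (forall y, exists x l, inX X x /\ Lam l /\ y = vadd E x l) /\
  (* (iv) injectivity on the union of interiors *)
  (forall a b x y l, interior (X a) x -> interior (X b) y -> Lam l ->
     y = vadd E x l -> y = x) /\
  (forall a a' x x' l, conv (X a) x -> conv (X a') x' -> Lam l -> x' = vadd E x l ->
     forall w, SpVt (X a') x' w <-> exists u, SpVt (X a) x u /\ w = vadd E u l).

End Generic.

Arguments conv {E}. Arguments prec {E}. Arguments SpVt {E}.

Definition full_lattice (p : nat) (Lam : Rn p -> Prop) : Prop :=
  exists B : list (Rn p), length B = p /\ lin_indep (Rn p) B /\
    forall l, Lam l <-> exists zs : list Z, length zs = p /\ l = lc (Rn p) (map IZR zs) B.

Definition linear_form (p : nat) (w : Rn p -> R) : Prop :=
  (forall x y, w (vadd (Rn p) x y) = w x + w y) /\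
  (forall c x, w (vscale (Rn p) c x) = c * w x).

(** a(u) in Z and A(u) = omega(u) + a(u) in (0,1] *)
Definition aZ {p} (w : Rn p -> R) (u : Rn p) : Z := up (- w u).
Definition AR {p} (w : Rn p -> R) (u : Rn p) : R := w u + IZR (aZ w u).

Definition precA {p} (w : Rn p -> R) (L : list (Rn p)) (u u' : Rn p) : Prop :=
  AR w u < AR w u' \/ (AR w u = AR w u' /\ prec L u u').

Definition LamHat {p} (Lam : Rn p -> Prop) (M1 M2 : Z) (x : RnR p) : Prop :=
  Lam (fst x) /\ exists z : Z, snd x = IZR ((M2 - M1) * z).

Record Jidx {p} {I : Type} (X : I -> list (Rn p)) (M1 M2 : Z) := mkJ {
  jal : I;
  jv : Rn p;
  jl : Z;
  jv_in : In jv (X jal);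
  jl_range : (M1 <= jl < M2)%Z
}.
Arguments jal {p I X M1 M2}. Arguments jv {p I X M1 M2}. Arguments jl {p I X M1 M2}.

(** Vertices of Y_gamma, listed in prec_gamma order: each vertex u of X_alpha
    (in prec_alpha order) contributes u x (a(u)+l) if u prec^A v, u x (a(u)+l-1)
    if v prec^A u, and both v x (a(v)+l), v x (a(v)+l-1) if u = v. *)
Definition Yverts {p} (w : Rn p -> R) (L : list (Rn p)) (v : Rn p) (l : Z)
  : list (RnR p) :=
  flat_map (fun u =>
    if excluded_middle_informative (u = v) then
      [(u, IZR (aZ w u + l)); (u, IZR (aZ w u + l - 1))]
    else if excluded_middle_informative (precA w L u v) then
      [(u, IZR (aZ w u + l))]
    else [(u, IZR (aZ w u + l - 1))]) L.

Definition Yfam {p} {I : Type} (w : Rn p -> R) (X : I -> list (Rn p)) (M1 M2 : Z)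
  (g : Jidx X M1 M2) : list (RnR p) :=
  Yverts w (X (jal g)) (jv g) (jl g).

Definition Omega {p} (w : Rn p -> R) (x : RnR p) : R := w (fst x) + snd x.

(* Main.v *)
Require Import Defs.
From Stdlib Require Import Reals List ZArith.
From Stdlib Require Import Lra Lia Classical ClassicalEpsilon FunctionalExtensionality Permutation.
Import ListNotations.
Open Scope R_scope.

Definition EMb (P : Prop) : bool := if excluded_middle_informative P then true else false.
Lemma EMb_true P : EMb P = true <-> P.
Proof. unfold EMb; destruct excluded_middle_informative; split; intros; auto; discriminate. Qed.

Fixpoint sumL {T} (g : T -> R) (L : list T) : R :=
  match L with [] => 0 | u :: L' => g u + sumL g L' end.

Section SumL.
Context {T : Type}.
Implicit Types (f g : T -> R) (L : list T).

Lemma sumL_app g L1 L2 : sumL g (L1 ++ L2) = sumL g L1 + sumL g L2.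
Proof. induction L1; simpl; [lra|rewrite IHL1; lra]. Qed.
Lemma sumL_plus f g L : sumL (fun u => f u + g u) L = sumL f L + sumL g L.
Proof. induction L; simpl; [lra|rewrite IHL; lra]. Qed.
Lemma sumL_minus f g L : sumL (fun u => f u - g u) L = sumL f L - sumL g L.
Proof. induction L; simpl; [lra|rewrite IHL; lra]. Qed.
Lemma sumL_scal c f L : sumL (fun u => c * f u) L = c * sumL f L.
Proof. induction L; simpl; [lra|rewrite IHL; lra]. Qed.
Lemma sumL_scalr c f L : sumL (fun u => f u * c) L = sumL f L * c.
Proof. induction L; simpl; [lra|rewrite IHL; lra]. Qed.
Lemma sumL_ext f g L : (forall u, In u L -> f u = g u) -> sumL f L = sumL g L.
Proof. induction L; simpl; intros H; auto. rewrite H, IHL; auto. Qed.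
Lemma sumL_le f g L : (forall u, In u L -> f u <= g u) -> sumL f L <= sumL g L.
Proof. induction L; simpl; intros H; [lra|]. specialize (IHL (fun u h => H u (or_intror h))).
  specialize (H a (or_introl eq_refl)). lra. Qed.
Lemma sumL_zero f L : (forall u, In u L -> f u = 0) -> sumL f L = 0.
Proof. intros H. rewrite (sumL_ext f (fun _ => 0)); auto. induction L; simpl; auto; rewrite IHL; try lra; auto.
  intros; apply H; simpl; auto. Qed.
Lemma sumL_nonneg f L : (forall u, In u L -> 0 <= f u) -> 0 <= sumL f L.
Proof. intros H. replace 0 with (sumL (fun _ => 0) L). apply sumL_le; auto. apply sumL_zero; auto. Qed.
Lemma sumL_const c L : sumL (fun _ => c) L = INR (length L) * c.
Proof. induction L; simpl length; [simpl; lra|]. rewrite S_INR; simpl; rewrite IHL; lra. Qed.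

Lemma sumL_delta L y g : NoDup L -> In y L ->
  sumL (fun u => if excluded_middle_informative (u = y) then g u else 0) L = g y.
Proof.
  induction L as [|a L IH]; simpl; intros ND Hy; [contradiction|]. inversion ND; subst.
  destruct Hy as [<-|Hy].
  - destruct excluded_middle_informative; [|congruence].
    rewrite sumL_zero; [lra|]. intros u Hu. destruct excluded_middle_informative; subst; [contradiction|auto].
  - destruct excluded_middle_informative; [subst; contradiction|]. rewrite IH; auto; lra.
Qed.

Lemma sumL_perm g L1 L2 : Permutation L1 L2 -> sumL g L1 = sumL g L2.
Proof. induction 1; simpl; lra. Qed.

Lemma sumL_filter g L (P : T -> Prop) : (forall u, In u L -> ~ P u -> g u = 0) ->
  sumL g L = sumL g (filter (fun u => EMb (P u)) L).
Proof.
  induction L; simpl; intros H; auto. unfold EMb at 1. destruct excluded_middle_informative.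
  - simpl. rewrite IHL; auto.
  - rewrite H; auto. rewrite IHL; auto; lra.
Qed.

Lemma sumL_support g L1 L2 : NoDup L1 -> NoDup L2 ->
  (forall u, In u L1 -> ~ In u L2 -> g u = 0) -> (forall u, In u L2 -> ~ In u L1 -> g u = 0) ->
  sumL g L1 = sumL g L2.
Proof.
  intros N1 N2 H1 H2. rewrite (sumL_filter g L1 (fun u => In u L2)); auto.
  rewrite (sumL_filter g L2 (fun u => In u L1)); auto.
  apply sumL_perm. apply NoDup_Permutation; try apply NoDup_filter; auto.
  intros x; rewrite !filter_In, !EMb_true; tauto.
Qed.
End SumL.

Lemma sumL_map {T U} (g : T -> R) (phi : U -> T) L : sumL g (map phi L) = sumL (fun u => g (phi u)) L.
Proof. induction L; simpl; auto; rewrite IHL; auto. Qed.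
Lemma sumL_flat_map {T U} (g : T -> R) (h : U -> list T) L :
  sumL g (flat_map h L) = sumL (fun u => sumL g (h u)) L.
Proof. induction L; simpl; auto. rewrite sumL_app, IHL; auto. Qed.

Lemma sumR_map {T} (f : T -> R) L : sumR (map f L) = sumL f L.
Proof. induction L; simpl; auto. unfold sumR in *; simpl; rewrite IHL; auto. Qed.

Section Prec.
Variable E : RVS.
Implicit Types (L : list E).

Lemma nth_error_NoDup_inj L i j x : NoDup L -> nth_error L i = Some x -> nth_error L j = Some x -> i = j.
Proof. intros ND Hi Hj. eapply (proj1 (NoDup_nth_error L)); eauto.
  apply nth_error_Some; congruence. congruence. Qed.

Lemma prec_In L a b : prec L a b -> In a L /\ In b L.
Proof. intros (i&j&_&Hi&Hj). split; eapply nth_error_In; eauto. Qed.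

Lemma prec_irrefl L a : NoDup L -> ~ prec L a a.
Proof. intros ND (i&j&Hij&Hi&Hj). assert (i = j) by (eapply nth_error_NoDup_inj; eauto). lia. Qed.

Lemma prec_trans L a b c : NoDup L -> prec L a b -> prec L b c -> prec L a c.
Proof. intros ND (i&j&Hij&Hi&Hj) (j'&k&Hjk&Hj'&Hk).
  assert (j = j') by (eapply nth_error_NoDup_inj; eauto). subst. exists i, k; repeat split; auto; lia. Qed.

Lemma prec_total L a b : In a L -> In b L -> a <> b -> prec L a b \/ prec L b a.
Proof. intros Ha Hb Hne. apply In_nth_error in Ha as [i Hi]. apply In_nth_error in Hb as [j Hj].
  destruct (Nat.lt_trichotomy i j) as [H|[H|H]].
  - left; exists i, j; auto.
  - subst; congruence.
  - right; exists j, i; auto. Qed.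

Lemma prec_asym L a b : NoDup L -> prec L a b -> ~ prec L b a.
Proof. intros ND H1 H2. apply (prec_irrefl L a ND). eapply prec_trans; eauto. Qed.

Lemma prec_cons u L a b : prec (u :: L) a b <-> (a = u /\ In b L) \/ prec L a b.
Proof.
  split.
  - intros (i&j&Hij&Hi&Hj). destruct j; [lia|]. simpl in Hj. destruct i.
    + simpl in Hi. left; split; [congruence|]. eapply nth_error_In; eauto.
    + right. exists i, j; simpl in Hi; repeat split; auto; lia.
  - intros [[-> Hb]|(i&j&Hij&Hi&Hj)].
    + apply In_nth_error in Hb as [j Hj]. exists 0%nat, (S j); simpl; repeat split; auto; lia.
    + exists (S i), (S j); simpl; repeat split; auto; lia.
Qed.

Lemma prec_app L1 L2 a b : prec (L1 ++ L2) a b <-> prec L1 a b \/ prec L2 a b \/ (In a L1 /\ In b L2).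
Proof.
  induction L1 as [|u L1 IH]; simpl.
  - split; [tauto|]. intros [(i&j&_&Hi&_)|[H|[[] _]]]; auto. destruct i; discriminate.
  - rewrite !prec_cons, IH. rewrite in_app_iff. split.
    + intros [[-> [H|H]]|[H|[H|[H1 H2]]]]; tauto.
    + intros [[[-> H]|H]|[H|[[H1|H1] H2]]]; try tauto. subst; tauto.
Qed.
End Prec.
Arguments prec_In {E}. Arguments prec_irrefl {E}. Arguments prec_trans {E}. Arguments prec_total {E}.
Arguments prec_asym {E}. Arguments prec_cons {E}. Arguments prec_app {E}.


Lemma lc_Rn p (f : Rn p -> R) (L : list (Rn p)) :
  lc (Rn p) (map f L) L = (fun i => sumL (fun u : Rn p => f u * u i) L).
Proof. induction L as [|a L IH]; [reflexivity|].
  transitivity (vadd (Rn p) (vscale (Rn p) (f a) a) (lc (Rn p) (map f L) L)); [reflexivity|].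
  rewrite IH. reflexivity. Qed.

Lemma lc_RnR p (F : RnR p -> R) (L : list (RnR p)) :
  lc (RnR p) (map F L) L = ((fun i => sumL (fun n : RnR p => F n * fst n i) L), sumL (fun n : RnR p => F n * snd n) L).
Proof. induction L as [|a L IH]; [reflexivity|].
  transitivity (vadd (RnR p) (vscale (RnR p) (F a) a) (lc (RnR p) (map F L) L)); [reflexivity|].
  rewrite IH. reflexivity. Qed.

Fixpoint fcoef {T} (L : list T) (cs : list R) : T -> R :=
  match L, cs with
  | u :: L', c :: cs' => fun y => if excluded_middle_informative (y = u) then c else fcoef L' cs' y
  | _, _ => fun _ => 0
  end.

Lemma fcoef_map {T} (L : list T) cs : NoDup L -> length cs = length L -> map (fcoef L cs) L = cs.
Proof.
  revert cs; induction L as [|u L IH]; intros [|c cs] ND Hl; simpl in *; try discriminate; auto.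
  inversion ND; subst. destruct excluded_middle_informative; [|congruence]. f_equal.
  transitivity (map (fcoef L cs) L); [|apply IH; auto]. apply map_ext_in. intros a Ha. destruct excluded_middle_informative; subst; tauto.
Qed.

Section Gen.
Variable E : RVS.
Definition repr (L : list E) (f : E -> R) (x : E) : Prop :=
  (forall u, In u L -> 0 <= f u) /\ sumL f L = 1 /\ x = lc E (map f L) L.

Lemma conv_fun L x : NoDup L -> conv L x <-> exists f, repr L f x.
Proof.
  intros ND; split.
  - intros [cs (Hl & Hpos & Hs & Hx)]. exists (fcoef L cs). rewrite <- (fcoef_map L cs) in Hpos, Hs, Hx; auto.
    repeat split; auto.
    + intros u Hu. rewrite Forall_forall in Hpos. apply Hpos, in_map; auto.
    + rewrite <- sumR_map; auto.
  - intros [f (Hpos & Hs & Hx)]. exists (map f L). repeat split; auto.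
    + apply length_map.
    + apply Forall_forall. intros c Hc. apply in_map_iff in Hc as (u & <- & Hu); auto.
    + rewrite sumR_map; auto.
Qed.

Lemma repr_conv L f x : repr L f x -> conv L x.
Proof. intros (Hpos & Hs & Hx). exists (map f L). repeat split; auto.
  + apply length_map.
  + apply Forall_forall. intros c Hc. apply in_map_iff in Hc as (u & <- & Hu); auto.
  + rewrite sumR_map; auto. Qed.

Lemma SpVt_fun L x w : NoDup L -> SpVt L x w <-> exists f, repr L f x /\ In w L /\ 0 < f w.
Proof.
  intros ND; split.
  - intros (cs & i & c & (Hl & Hpos & Hs & Hx) & Hw & Hc & Hcp).
    exists (fcoef L cs). rewrite <- (fcoef_map L cs) in Hpos, Hs, Hx, Hc; auto.
    repeat split; auto.
    + intros u Hu. rewrite Forall_forall in Hpos. apply Hpos, in_map; auto.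
    + rewrite <- sumR_map; auto.
    + eapply nth_error_In; eauto.
    + rewrite nth_error_map, Hw in Hc. simpl in Hc. congruence.
  - intros (f & (Hpos & Hs & Hx) & Hw & Hf). apply In_nth_error in Hw as [i Hi].
    exists (map f L), i, (f w). repeat split; auto.
    + apply length_map.
    + apply Forall_forall. intros c Hc. apply in_map_iff in Hc as (u & <- & Hu); auto.
    + rewrite sumR_map; auto.
    + rewrite nth_error_map, Hi; auto.
Qed.
End Gen.
Arguments repr {E}. Arguments conv_fun {E}. Arguments repr_conv {E}. Arguments SpVt_fun {E}.

Lemma repr_unique p (L : list (Rn p)) f g x : aff_indep (Rn p) L ->
  repr L f x -> repr L g x -> forall u, In u L -> f u = g u.
Proof.
  intros AI (_ & Hf & Hx) (_ & Hg & Hx') u Hu.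
  specialize (AI (map (fun u => f u - g u) L)). rewrite length_map in AI.
  assert (H : Forall (fun c => c = 0) (map (fun u => f u - g u) L)).
  { apply AI; auto.
    - rewrite sumR_map, sumL_minus; lra.
    - rewrite lc_Rn. rewrite lc_Rn in Hx, Hx'. simpl. apply functional_extensionality; intros i.
      rewrite (sumL_ext _ (fun u => f u * u i - g u * u i)) by (intros; ring).
      rewrite sumL_minus. assert (E1 : x i = sumL (fun u : Rn p => f u * u i) L) by (rewrite Hx; reflexivity).
      assert (E2 : x i = sumL (fun u : Rn p => g u * u i) L) by (rewrite Hx'; reflexivity). lra. }
  rewrite Forall_forall in H. specialize (H (f u - g u) (in_map _ _ _ Hu)). lra.
Qed.

Fixpoint ffold {T} (L0 : list T) (cs : list R) : T -> R :=
  match L0, cs with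
  | y :: L0', c :: cs' => fun u => (if excluded_middle_informative (u = y) then c else 0) + ffold L0' cs' u
  | _, _ => fun _ => 0
  end.

Fixpoint sumC {T} (cs : list R) (L0 : list T) (G : T -> R) : R :=
  match cs, L0 with c :: cs', y :: L0' => c * G y + sumC cs' L0' G | _, _ => 0 end.

Lemma ffold_sum {T} (L0 L : list T) cs (G : T -> R) : NoDup L -> (forall y, In y L0 -> In y L) ->
  sumL (fun u => ffold L0 cs u * G u) L = sumC cs L0 G.
Proof.
  revert cs; induction L0 as [|y L0 IH]; intros [|c cs] ND Hsub; simpl; try (apply sumL_zero; intros; lra).
  rewrite (sumL_ext _ (fun u => (if excluded_middle_informative (u = y) then c * G u else 0) + ffold L0 cs u * G u)).
  2:{ intros u _. destruct excluded_middle_informative; lra. }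
  rewrite sumL_plus, sumL_delta, IH; auto; [intros; apply Hsub; simpl; auto|apply Hsub; simpl; auto].
Qed.

Lemma ffold_nonneg {T} (L0 : list T) cs u : Forall (fun c => 0 <= c) cs -> 0 <= ffold L0 cs u.
Proof. revert cs; induction L0; intros [|c cs] H; simpl; try lra. inversion H; subst.
  specialize (IHL0 cs H3). destruct excluded_middle_informative; lra. Qed.

Lemma ffold_out {T} (L0 : list T) cs u : ~ In u L0 -> ffold L0 cs u = 0.
Proof. revert cs; induction L0; intros [|c cs] H; simpl; try lra. simpl in H.
  destruct excluded_middle_informative; [subst; tauto|]. rewrite IHL0; auto; lra. Qed.

Lemma sumC_sumR {T} cs (L0 : list T) : length cs = length L0 -> sumC cs L0 (fun _ => 1) = sumR cs.
Proof. revert L0; induction cs; intros [|y L0] H; simpl in *; try discriminate; auto.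
  unfold sumR in *; simpl. rewrite IHcs; [lra|lia]. Qed.

Lemma sumC_Rn p cs (L0 : list (Rn p)) i : sumC cs L0 (fun y => y i) = lc (Rn p) cs L0 i.
Proof. revert L0; induction cs; intros [|y L0]; simpl; auto. rewrite IHcs; auto. Qed.

Lemma sumC_RnR1 p cs (L0 : list (RnR p)) i : sumC cs L0 (fun y => fst y i) = fst (lc (RnR p) cs L0) i.
Proof. revert L0; induction cs; intros [|y L0]; simpl; auto. rewrite IHcs; auto. Qed.
Lemma sumC_RnR2 p cs (L0 : list (RnR p)) : sumC cs L0 (fun y => snd y) = snd (lc (RnR p) cs L0).
Proof. revert L0; induction cs; intros [|y L0]; simpl; auto. rewrite IHcs; auto. Qed.

Lemma conv_sub_Rn p (L0 L : list (Rn p)) x : NoDup L -> (forall y, In y L0 -> In y L) -> conv L0 x ->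
  exists f, repr L f x /\ (forall u, ~ In u L0 -> f u = 0).
Proof.
  intros ND Hsub [cs (Hl & Hpos & Hs & Hx)]. exists (ffold L0 cs). split; [split; [|split]|].
  - intros; apply ffold_nonneg; auto.
  - rewrite (sumL_ext _ (fun u => ffold L0 cs u * 1)) by (intros; lra). rewrite ffold_sum, sumC_sumR; auto.
  - rewrite lc_Rn. subst x. apply functional_extensionality; intros i. rewrite ffold_sum, sumC_Rn; auto.
  - intros; apply ffold_out; auto.
Qed.

Lemma conv_sub_RnR p (L0 L : list (RnR p)) x : NoDup L -> (forall y, In y L0 -> In y L) -> conv L0 x ->
  conv L x.
Proof.
  intros ND Hsub [cs (Hl & Hpos & Hs & Hx)]. apply repr_conv with (f := ffold L0 cs). split; [|split].
  - intros; apply ffold_nonneg; auto.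
  - rewrite (sumL_ext _ (fun u => ffold L0 cs u * 1)) by (intros; lra). rewrite ffold_sum, sumC_sumR; auto.
  - rewrite lc_RnR. subst x. destruct (lc (RnR p) cs L0) as [x1 x2] eqn:E0. f_equal.
    + apply functional_extensionality; intros i. rewrite ffold_sum, sumC_RnR1, E0; auto.
    + rewrite ffold_sum, sumC_RnR2, E0; auto.
Qed.


Lemma Zle_of_lt_succ (a b : Z) : IZR a < IZR b + 1 -> (a <= b)%Z.
Proof. intros H. assert (IZR a < IZR (b+1)) by (rewrite plus_IZR; simpl; lra). apply lt_IZR in H0; lia. Qed.
Lemma Zge_of_pred_lt (a b : Z) : IZR b - 1 < IZR a -> (b <= a)%Z.
Proof. intros H. assert (IZR (b-1) < IZR a) by (rewrite minus_IZR; simpl; lra). apply lt_IZR in H0; lia. Qed.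

Lemma up_bounds x : 0 < x + IZR (up (- x)) <= 1.
Proof. destruct (archimed (- x)). lra. Qed.
Lemma AR_bounds {p} (w : Rn p -> R) u : 0 < AR w u <= 1.
Proof. unfold AR, aZ. apply up_bounds. Qed.

Section Y.
Variable p : nat.
Variable w : Rn p -> R.
Implicit Types (L : list (Rn p)) (u v : Rn p) (c : Rn p -> R).

Definition hiv u (l : Z) : RnR p := (u, IZR (aZ w u + l)).
Definition lov u (l : Z) : RnR p := (u, IZR (aZ w u + l - 1)).

Lemma hi_neq_lo u l : hiv u l <> lov u l.
Proof. unfold hiv, lov. intros H. inversion H as [Hk]. apply eq_IZR in Hk. lia. Qed.

Definition blk L v l u : list (RnR p) :=
  if excluded_middle_informative (u = v) then [hiv u l; lov u l]
  else if excluded_middle_informative (precA w L u v) then [hiv u l]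
  else [lov u l].

Lemma Yverts_eq L v l : Yverts w L v l = flat_map (blk L v l) L.
Proof. reflexivity. Qed.

Lemma blk_fst L v l u n : In n (blk L v l u) -> fst n = u.
Proof. unfold blk, hiv, lov. repeat destruct excluded_middle_informative; simpl; intuition; subst; auto. Qed.

Lemma In_Y L v l n : In n (Yverts w L v l) <-> exists u, In u L /\ In n (blk L v l u).
Proof. rewrite Yverts_eq, in_flat_map. tauto. Qed.

Lemma NoDup_fm L0 v l L : NoDup L -> NoDup (flat_map (blk L0 v l) L).
Proof.
  intros ND. induction L as [|u L IH]; simpl; [constructor|]. inversion ND; subst.
  apply NoDup_app.
  - unfold blk. repeat destruct excluded_middle_informative; repeat constructor; simpl; intuition.
    apply (hi_neq_lo u l); auto.
  - apply IH; auto.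
  - intros n Hn1 Hn2. apply in_flat_map in Hn2 as (u' & Hu' & Hn2).
    apply blk_fst in Hn1. apply blk_fst in Hn2. assert (u = u') by congruence. subst; contradiction.
Qed.

Lemma NoDup_Y L v l : NoDup L -> NoDup (Yverts w L v l).
Proof. intros; rewrite Yverts_eq; apply NoDup_fm; auto. Qed.

Lemma length_fm L0 v l L : NoDup L -> ~ In v L -> length (flat_map (blk L0 v l) L) = length L.
Proof.
  induction L as [|u L IH]; intros ND Hv; [reflexivity|]. inversion ND; subst.
  change (flat_map (blk L0 v l) (u::L)) with (blk L0 v l u ++ flat_map (blk L0 v l) L).
  simpl in Hv. rewrite length_app, IH by tauto. unfold blk at 1.
  destruct excluded_middle_informative; [subst; tauto|].
  destruct excluded_middle_informative; simpl; auto.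
Qed.

Lemma length_fm2 L0 v l L : NoDup L -> In v L -> length (flat_map (blk L0 v l) L) = S (length L).
Proof.
  induction L as [|u L IH]; intros ND Hv; [contradiction|]. inversion ND; subst.
  change (flat_map (blk L0 v l) (u::L)) with (blk L0 v l u ++ flat_map (blk L0 v l) L).
  simpl in Hv. rewrite length_app. destruct Hv as [<-|Hv].
  - rewrite length_fm; auto. unfold blk at 1. destruct excluded_middle_informative; [|congruence]. reflexivity.
  - rewrite IH; auto. unfold blk at 1. destruct excluded_middle_informative; [subst; contradiction|].
    destruct excluded_middle_informative; simpl; auto.
Qed.

Lemma length_Y L v l : NoDup L -> In v L -> length (Yverts w L v l) = S (length L).
Proof. intros; rewrite Yverts_eq; apply length_fm2; auto. Qed.

Lemma precA_irrefl L u : NoDup L -> ~ precA w L u u.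
Proof. intros ND [H|[_ H]]; [lra|]. eapply prec_irrefl; eauto. Qed.

Lemma precA_trans L a b d : NoDup L -> precA w L a b -> precA w L b d -> precA w L a d.
Proof. intros ND [H1|[H1 H1']] [H2|[H2 H2']]; unfold precA;
  first [left; lra | right; split; [lra|eapply prec_trans; eauto]]. Qed.

Lemma precA_total L a b : In a L -> In b L -> a <> b -> precA w L a b \/ precA w L b a.
Proof. intros Ha Hb Hne. unfold precA. destruct (Rtotal_order (AR w a) (AR w b)) as [H|[H|H]].
  - left; left; auto.
  - destruct (prec_total L a b) as [H'|H']; auto.
  - right; left; auto. Qed.

Lemma precA_asym L a b : NoDup L -> precA w L a b -> ~ precA w L b a.
Proof. intros ND H1 H2. apply (precA_irrefl L a ND). eapply precA_trans; eauto. Qed.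

Lemma precA_AR L a b : precA w L a b -> AR w a <= AR w b.
Proof. intros [H|[H _]]; lra. Qed.

Definition Bm L c u : R := sumL (fun u' => if excluded_middle_informative (precA w L u' u) then c u' else 0) L.

Lemma Bm_nonneg L c u : (forall u, In u L -> 0 <= c u) -> 0 <= Bm L c u.
Proof. intros H. apply sumL_nonneg. intros; destruct excluded_middle_informative; auto; lra. Qed.

Lemma Bm_lt L c u v : NoDup L -> In u L -> (forall u, In u L -> 0 <= c u) -> precA w L u v ->
  Bm L c u + c u <= Bm L c v.
Proof.
  intros ND Hu Hc Huv. unfold Bm. rewrite <- (sumL_delta L u c) by auto.
  rewrite <- sumL_plus. apply sumL_le. intros u' Hu'. specialize (Hc u' Hu').
  destruct (excluded_middle_informative (precA w L u' u)) as [H1|H1];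
  destruct (excluded_middle_informative (u' = u)) as [H2|H2];
  destruct (excluded_middle_informative (precA w L u' v)) as [H3|H3]; subst; try lra.
  - exfalso; eapply precA_irrefl; eauto.
  - exfalso; eapply precA_irrefl; eauto.
  - exfalso; apply H3; eapply precA_trans; eauto.
  - tauto.
Qed.

Lemma Bm_le_total L c v : NoDup L -> In v L -> (forall u, In u L -> 0 <= c u) ->
  Bm L c v + c v <= sumL c L.
Proof.
  intros ND Hv Hc. unfold Bm. rewrite <- (sumL_delta L v c) by auto.
  rewrite <- sumL_plus. apply sumL_le. intros u' Hu'. specialize (Hc u' Hu').
  repeat destruct excluded_middle_informative; subst; try lra.
  exfalso; eapply precA_irrefl; eauto.
Qed.

Definition hsum L c : R := sumL (fun u => c u * IZR (aZ w u)) L.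

Definition CF L c (t : R) u (k : Z) : Prop :=
  0 < c u /\ IZR k - 1 + Bm L c u < t - hsum L c < IZR k + Bm L c u + c u.

Lemma CF_ext L c c' t u k : (forall u, In u L -> c u = c' u) -> In u L -> (CF L c t u k <-> CF L c' t u k).
Proof.
  intros H Hu. unfold CF, Bm, hsum. rewrite H by auto.
  rewrite (sumL_ext (fun u0 => c u0 * IZR (aZ w u0)) (fun u0 => c' u0 * IZR (aZ w u0))) by (intros; rewrite H; auto).
  rewrite (sumL_ext (fun u0 => if excluded_middle_informative (precA w L u0 u) then c u0 else 0) (fun u0 => if excluded_middle_informative (precA w L u0 u) then c' u0 else 0)).
  tauto. intros; destruct excluded_middle_informative; auto.
Qed.

Definition cY L v l (F : RnR p -> R) u : R := sumL F (blk L v l u).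


Lemma blk_snd L v l F u : NoDup L ->
  sumL (fun n => F n * snd n) (blk L v l u) =
  cY L v l F u * (IZR (aZ w u) + IZR l - 1)
  + (if excluded_middle_informative (precA w L u v) then cY L v l F u else 0)
  + (if excluded_middle_informative (u = v) then F (hiv u l) else 0).
Proof.
  intros ND. unfold cY, blk, hiv, lov. repeat destruct excluded_middle_informative; subst; simpl;
    try (exfalso; eapply precA_irrefl; eauto; fail);
    rewrite ?minus_IZR, ?plus_IZR; simpl; try ring; try congruence.
Qed.

Section Rep.
Variables (L : list (Rn p)) (v : Rn p) (l : Z) (F : RnR p -> R).
Hypothesis ND : NoDup L.
Hypothesis Hv : In v L.
Hypothesis Fpos : forall n, In n (Yverts w L v l) -> 0 <= F n.
Hypothesis Fsum : sumL F (Yverts w L v l) = 1.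
Let c := cY L v l F.

Lemma cY_nonneg u : In u L -> 0 <= c u.
Proof. intros Hu. apply sumL_nonneg. intros n Hn. apply Fpos, In_Y; eauto. Qed.

Lemma cY_sum : sumL c L = 1.
Proof. rewrite <- Fsum, Yverts_eq, sumL_flat_map. reflexivity. Qed.

Lemma cY_base : fst (lc (RnR p) (map F (Yverts w L v l)) (Yverts w L v l)) = lc (Rn p) (map c L) L.
Proof.
  rewrite lc_RnR, lc_Rn. simpl. apply functional_extensionality; intros i.
  rewrite Yverts_eq, sumL_flat_map. apply sumL_ext. intros u Hu. unfold c, cY.
  rewrite <- sumL_scalr. apply sumL_ext. intros n Hn. rewrite (blk_fst _ _ _ _ _ Hn). auto.
Qed.

Lemma cY_repr x : x = lc (RnR p) (map F (Yverts w L v l)) (Yverts w L v l) -> repr L c (fst x).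
Proof. intros ->. split; [|split]. apply cY_nonneg. apply cY_sum. apply cY_base. Qed.

Lemma cY_height : snd (lc (RnR p) (map F (Yverts w L v l)) (Yverts w L v l)) =
  hsum L c + IZR l - 1 + Bm L c v + F (hiv v l).
Proof.
  rewrite lc_RnR. simpl. rewrite Yverts_eq, sumL_flat_map.
  rewrite (sumL_ext _ _ L (fun u _ => blk_snd L v l F u ND)).
  rewrite !sumL_plus. unfold hsum, Bm.
  rewrite (sumL_ext (fun u => cY L v l F u * (IZR (aZ w u) + IZR l - 1)) (fun u => c u * IZR (aZ w u) + c u * (IZR l - 1))) by (intros; unfold c; ring).
  rewrite sumL_plus, sumL_scalr, cY_sum.
  rewrite (sumL_delta L v (fun u => F (hiv u l))); auto.
  fold c. ring.
Qed.

Lemma blk_v_vals : F (hiv v l) + F (lov v l) = c v /\ 0 <= F (hiv v l) /\ 0 <= F (lov v l).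
Proof.
  unfold c, cY, blk. destruct excluded_middle_informative; [|congruence]. simpl.
  assert (H1 : In (hiv v l) (Yverts w L v l)) by (apply In_Y; exists v; split; [auto|]; unfold blk; destruct excluded_middle_informative; [simpl; auto|congruence]).
  assert (H2 : In (lov v l) (Yverts w L v l)) by (apply In_Y; exists v; split; [auto|]; unfold blk; destruct excluded_middle_informative; [simpl; auto|congruence]).
  apply Fpos in H1; apply Fpos in H2. repeat split; auto; lra.
Qed.

Lemma In_Y_vert u k : In u L ->
  (In (u, IZR (aZ w u + k)) (Yverts w L v l) <->
   (k = l /\ (u = v \/ precA w L u v)) \/ (k = (l - 1)%Z /\ (u = v \/ ~ precA w L u v))).
Proof.
  intros Hu. rewrite In_Y. split.
  - intros (u' & Hu' & Hn). assert (u' = u) by (apply blk_fst in Hn; auto). subst u'.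
    unfold blk, hiv, lov in Hn.
    destruct (excluded_middle_informative (u = v)) as [E1|E1].
    + simpl in Hn. destruct Hn as [Hn|[Hn|[]]]; inversion Hn as [Hk]; apply eq_IZR in Hk.
      * left; split; [lia|tauto].
      * right; split; [lia|tauto].
    + destruct (excluded_middle_informative (precA w L u v)) as [E2|E2]; simpl in Hn;
        destruct Hn as [Hn|[]]; inversion Hn as [Hk]; apply eq_IZR in Hk.
      * left; split; [lia|tauto].
      * right; split; [lia|tauto].
  - intros H. exists u; split; auto. unfold blk, hiv, lov.
    destruct H as [[-> H]|[-> H]]; repeat destruct excluded_middle_informative; simpl; try tauto;
      repeat f_equal; try lia.
    all: replace (aZ w u + (l - 1))%Z with (aZ w u + l - 1)%Z by lia; tauto.
Qed.

Lemma S1 x u k : x = lc (RnR p) (map F (Yverts w L v l)) (Yverts w L v l) -> In u L ->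
  (CF L c (snd x) u k <-> In (u, IZR (aZ w u + k)) (Yverts w L v l) /\ 0 < F (u, IZR (aZ w u + k))).
Proof.
  intros Hx Hu. rewrite In_Y_vert by auto.
  assert (Ht : snd x - hsum L c = IZR l - 1 + Bm L c v + F (hiv v l)) by (rewrite Hx, cY_height; ring).
  unfold CF. rewrite Ht.
  destruct blk_v_vals as (Hmn & Hm & Hn).
  assert (HBv := Bm_le_total L c v ND Hv cY_nonneg). rewrite cY_sum in HBv.
  assert (HBv0 := Bm_nonneg L c v cY_nonneg).
  assert (HBu0 := Bm_nonneg L c u cY_nonneg).
  assert (HBu := Bm_le_total L c u ND Hu cY_nonneg). rewrite cY_sum in HBu.
  destruct (excluded_middle_informative (u = v)) as [->|Huv].
  - unfold hiv, lov in *. split.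
    + intros (Hc & H1 & H2).
      assert (k <= l)%Z by (apply Zle_of_lt_succ; lra).
      assert (l - 1 <= k)%Z by (apply Zge_of_pred_lt; rewrite minus_IZR; simpl; lra).
      destruct (Z.eq_dec k l) as [->|Hkl].
      * split; [left; tauto|]. lra.
      * assert (k = l - 1)%Z by lia. subst k. split; [right; tauto|].
        replace (aZ w v + (l - 1))%Z with (aZ w v + l - 1)%Z by lia. rewrite minus_IZR in H1, H2. lra.
    + intros [[[-> _]|[-> _]] Hp].
      * split; [lra|]. split; lra.
      * replace (aZ w v + (l - 1))%Z with (aZ w v + l - 1)%Z in Hp by lia.
        rewrite minus_IZR. split; [lra|]. split; lra.
  - destruct (excluded_middle_informative (precA w L u v)) as [Hp|Hp].
    + assert (Hcu : F (u, IZR (aZ w u + l)) = c u).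
      { unfold c, cY, blk, hiv. destruct excluded_middle_informative; [congruence|].
        destruct excluded_middle_informative; [simpl; ring|contradiction]. }
      assert (HB := Bm_lt L c u v ND Hu cY_nonneg Hp). split.
      * intros (Hc & H1 & H2).
        assert (k <= l)%Z by (apply Zle_of_lt_succ; lra).
        assert (l <= k)%Z by (apply Zge_of_pred_lt; lra).
        assert (k = l) by lia. subst k. split; [left; tauto|]. lra.
      * intros [[[-> _]|[-> [H|H]]] Hpos]; try tauto.
        split; [lra|]. split; lra.
    + assert (Hcu : F (u, IZR (aZ w u + (l - 1))) = c u).
      { unfold c, cY, blk, lov. destruct excluded_middle_informative; [congruence|].
        destruct excluded_middle_informative; [contradiction|simpl].
        replace (aZ w u + l - 1)%Z with (aZ w u + (l - 1))%Z by lia. ring. }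
      assert (Hvu : precA w L v u) by (destruct (precA_total L u v) as [H|H]; auto; tauto).
      assert (HB := Bm_lt L c v u ND Hv cY_nonneg Hvu). split.
      * intros (Hc & H1 & H2).
        assert (k <= l - 1)%Z by (apply Zle_of_lt_succ; rewrite minus_IZR; lra).
        assert (l - 1 <= k)%Z by (apply Zge_of_pred_lt; rewrite minus_IZR; lra).
        assert (k = l - 1)%Z by lia. subst k. split; [right; tauto|]. lra.
      * intros [[[-> [H|H]]|[-> _]] Hpos]; try tauto.
        rewrite minus_IZR. split; [lra|]. split; lra.
Qed.
End Rep.
End Y.


Lemma prec_flat_map {T U : RVS} (g : U -> list T) (L : list U) n n' :
  prec (flat_map g L) n n' <->
  (exists u, In u L /\ prec (g u) n n') \/ (exists u u', prec L u u' /\ In n (g u) /\ In n' (g u')).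
Proof.
  induction L as [|u L IH].
  - simpl. split; [intros (i&j&_&Hi&_); destruct i; discriminate|].
    intros [(u&[]&_)|(u&u'&(i&j&_&Hi&_)&_)]; destruct i; discriminate.
  - change (flat_map g (u :: L)) with (g u ++ flat_map g L). rewrite prec_app, IH. split.
    + intros [H|[[(u1&Hu1&H)|(u1&u2&H1&H2&H3)]|(H1&H2)]].
      * left; exists u; simpl; auto.
      * left; exists u1; simpl; auto.
      * right; exists u1, u2; rewrite prec_cons; auto.
      * apply in_flat_map in H2 as (u2&Hu2&H2). right; exists u, u2; rewrite prec_cons; auto.
    + intros [(u1&[<-|Hu1]&H)|(u1&u2&H1&H2&H3)]; auto.
      * right; left; left; exists u1; auto.
      * rewrite prec_cons in H1. destruct H1 as [[-> Hu2]|H1].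
        -- right; right; split; auto. apply in_flat_map; eauto.
        -- right; left; right; exists u1, u2; auto.
Qed.

Section Y2.
Variable p : nat.
Variable w : Rn p -> R.

Lemma In_Y_form L v l n : In n (Yverts w L v l) ->
  exists u k, In u L /\ n = (u, IZR (aZ w u + k)) /\ (k = l \/ k = l - 1)%Z.
Proof.
  intros H. apply In_Y in H as (u & Hu & Hn). exists u.
  unfold blk, hiv, lov in Hn. repeat destruct excluded_middle_informative; simpl in Hn;
    repeat destruct Hn as [Hn|Hn]; try contradiction; subst.
  - exists l. split; [auto|split; [reflexivity|left; reflexivity]].
  - exists (l - 1)%Z. split; [auto|split; [apply f_equal, f_equal; lia|right; reflexivity]].
  - exists l. split; [auto|split; [reflexivity|left; reflexivity]].
  - exists (l - 1)%Z. split; [auto|split; [apply f_equal, f_equal; lia|right; reflexivity]].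
Qed.

Lemma PY L v l n n' : NoDup L ->
  prec (Yverts w L v l) n n' <->
  In n (Yverts w L v l) /\ In n' (Yverts w L v l) /\
  (prec L (fst n) (fst n') \/ (fst n = fst n' /\ snd n' < snd n)).
Proof.
  intros ND. split.
  - intros H. assert (HI := prec_In _ _ _ H). split; [tauto|split; [tauto|]].
    rewrite Yverts_eq, prec_flat_map in H. destruct H as [(u&Hu&H)|(u&u'&H1&H2&H3)].
    + unfold blk in H. destruct excluded_middle_informative.
      * rewrite prec_cons in H. destruct H as [[-> [H|[]]]|H].
        -- subst. right. unfold hiv, lov; simpl. split; auto. rewrite minus_IZR. lra.
        -- rewrite prec_cons in H. destruct H as [[_ []]|(i&j&_&Hi&_)]. destruct i; discriminate.
      * destruct excluded_middle_informative; rewrite prec_cons in H;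
          (destruct H as [[_ []]|(i&j&_&Hi&_)]; destruct i; discriminate).
    + left. rewrite (blk_fst _ _ _ _ _ _ _ H2), (blk_fst _ _ _ _ _ _ _ H3). auto.
  - intros (H1 & H2 & H3). rewrite Yverts_eq, prec_flat_map.
    rewrite In_Y in H1, H2. destruct H1 as (u & Hu & H1). destruct H2 as (u' & Hu' & H2).
    assert (E1 := blk_fst _ _ _ _ _ _ _ H1). assert (E2 := blk_fst _ _ _ _ _ _ _ H2).
    destruct H3 as [H3|[H3 H4]].
    + right. exists u, u'. subst u u'. auto.
    + left. exists u. split; auto. assert (Hu'u : u' = u) by congruence. rewrite Hu'u in H2.
      unfold blk in *. destruct excluded_middle_informative.
      * simpl in H1, H2. destruct H1 as [H1|[H1|[]]]; destruct H2 as [H2|[H2|[]]]; subst; unfold hiv, lov in H4; simpl in H4;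
          rewrite ?minus_IZR in H4; try lra.
        apply prec_cons. left; split; auto. simpl; auto.
      * destruct excluded_middle_informative; simpl in H1, H2;
          destruct H1 as [H1|[]]; destruct H2 as [H2|[]]; subst; lra.
Qed.

Lemma w_lc L c : linear_form p w -> w (lc (Rn p) (map c L) L) = sumL (fun u => c u * w u) L.
Proof.
  intros [Hadd Hsc]. induction L as [|u L IH].
  - assert (H0 : vzero (Rn p) = vscale (Rn p) 0 (vzero (Rn p))) by (apply functional_extensionality; intros; simpl; lra).
    change (lc (Rn p) (map c []) []) with (vzero (Rn p)). rewrite H0, Hsc. simpl; lra.
  - transitivity (w (vadd (Rn p) (vscale (Rn p) (c u) u) (lc (Rn p) (map c L) L))); [reflexivity|].
    rewrite Hadd, Hsc, IH. reflexivity.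
Qed.

Lemma Omega_bound L v l k : NoDup L -> In v L -> linear_form p w -> conv (Yverts w L v l) k ->
  AR w v + IZR l - 1 <= Omega w k <= AR w v + IZR l.
Proof.
  intros ND Hv Hw Hk. apply (conv_fun _ _ (NoDup_Y p w L v l ND)) in Hk as [F (Fpos & Fsum & Hk)].
  assert (Hb := cY_base p w L v l F). rewrite <- Hk in Hb.
  assert (Ho : Omega w k = sumL (fun n => F n * (w (fst n) + snd n)) (Yverts w L v l)).
  { unfold Omega. rewrite Hb, w_lc by auto.
    rewrite Hk. rewrite lc_RnR. simpl.
    rewrite (sumL_ext (fun n => F n * (w (fst n) + snd n)) (fun n => F n * w (fst n) + F n * snd n)) by (intros; ring).
    rewrite sumL_plus. f_equal. rewrite Yverts_eq, sumL_flat_map. apply sumL_ext.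
    intros u Hu. unfold cY. rewrite <- sumL_scalr. apply sumL_ext. intros n Hn.
    rewrite (blk_fst _ _ _ _ _ _ _ Hn). auto. }
  assert (HA := AR_bounds w v).
  assert (Hbnd : forall n, In n (Yverts w L v l) -> AR w v + IZR l - 1 <= w (fst n) + snd n <= AR w v + IZR l).
  { intros n Hn. apply In_Y in Hn as (u & Hu & Hn). assert (HAu := AR_bounds w u).
    unfold blk, hiv, lov in Hn. unfold AR in *.
    destruct excluded_middle_informative as [->|Hne].
    - simpl in Hn. destruct Hn as [<-|[<-|[]]]; simpl; rewrite ?minus_IZR, plus_IZR; lra.
    - destruct excluded_middle_informative as [Hp|Hp]; simpl in Hn; destruct Hn as [<-|[]]; simpl;
        rewrite ?minus_IZR, plus_IZR.
      + apply precA_AR in Hp. unfold AR in Hp. lra.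
      + assert (~ (AR w u < AR w v)) by (intro; apply Hp; left; auto). unfold AR in H. lra. }
  rewrite Ho. split.
  - rewrite <- (Rmult_1_r (AR w v + IZR l - 1)), <- Fsum, <- sumL_scal.
    apply sumL_le. intros n Hn. specialize (Hbnd n Hn). specialize (Fpos n Hn).
    nra.
  - rewrite <- (Rmult_1_r (AR w v + IZR l)), <- Fsum, <- sumL_scal.
    apply sumL_le. intros n Hn. specialize (Hbnd n Hn). specialize (Fpos n Hn).
    nra.
Qed.

Lemma aff_indep_Y L v l : NoDup L -> In v L -> aff_indep (Rn p) L -> aff_indep (RnR p) (Yverts w L v l).
Proof.
  intros ND Hv AI cs Hl Hs Hz. set (Y := Yverts w L v l) in *.
  assert (NDY : NoDup Y) by apply NoDup_Y, ND.
  set (G := fcoef Y cs). assert (HG : map G Y = cs) by (apply fcoef_map; auto).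
  rewrite <- HG in Hs, Hz |- *. rewrite sumR_map in Hs. rewrite lc_RnR in Hz.
  injection Hz as Hz1 Hz2.
  set (g := fun u => sumL G (blk p w L v l u)).
  assert (Hg : forall u, In u L -> g u = 0).
  { specialize (AI (map g L)). rewrite length_map in AI.
    assert (H : Forall (fun c => c = 0) (map g L)).
    { apply AI; auto.
      - rewrite sumR_map. rewrite <- Hs. unfold Y. rewrite Yverts_eq, sumL_flat_map. reflexivity.
      - rewrite lc_Rn. apply functional_extensionality; intros i.
        assert (E := f_equal (fun h => h i) Hz1). simpl in E |- *. rewrite <- E.
        unfold Y. rewrite Yverts_eq, sumL_flat_map. apply sumL_ext. intros u Hu.
        unfold g. rewrite <- sumL_scalr. apply sumL_ext. intros n Hn. rewrite (blk_fst _ _ _ _ _ _ _ Hn). auto. }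
    rewrite Forall_forall in H. intros u Hu. apply H, in_map, Hu. }
  assert (HGu : forall u, In u L -> u <> v -> forall n, In n (blk p w L v l u) -> G n = 0).
  { intros u Hu Huv n Hn. specialize (Hg u Hu). unfold g, blk in Hg, Hn.
    destruct excluded_middle_informative; [contradiction|].
    destruct excluded_middle_informative; simpl in Hg, Hn; destruct Hn as [<-|[]]; lra. }
  assert (Hsnd : sumL (fun n => G n * snd n) Y = G (hiv p w v l) * snd (hiv p w v l) + G (lov p w v l) * snd (lov p w v l)).
  { unfold Y. rewrite Yverts_eq, sumL_flat_map.
    rewrite (sumL_ext _ (fun u => if excluded_middle_informative (u = v) then
       G (hiv p w u l) * snd (hiv p w u l) + G (lov p w u l) * snd (lov p w u l) else 0)).
    - rewrite (sumL_delta L v (fun u => G (hiv p w u l) * snd (hiv p w u l) + G (lov p w u l) * snd (lov p w u l))); auto.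
    - intros u Hu. destruct excluded_middle_informative as [->|Hne].
      + unfold blk. destruct excluded_middle_informative; [|congruence]. simpl. ring.
      + apply sumL_zero. intros n Hn. rewrite (HGu u Hu Hne n Hn). ring. }
  assert (Hv0 := Hg v Hv). unfold g, blk in Hv0. destruct excluded_middle_informative; [|congruence]. simpl in Hv0.
  assert (Hz2b : sumL (fun n : RnR p => G n * snd n) Y = 0) by exact Hz2. rewrite Hz2b in Hsnd. unfold hiv, lov in Hsnd, Hv0. cbn [snd] in Hsnd.
  set (a := G (v, IZR (aZ w v + l))) in *. set (b := G (v, IZR (aZ w v + l - 1))) in *.
  rewrite minus_IZR in Hsnd. replace b with (-a) in Hsnd by lra. ring_simplify in Hsnd.
  assert (Hh : G (hiv p w v l) = 0) by (unfold hiv; fold a; lra).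
  assert (Hlo : G (lov p w v l) = 0) by (unfold lov; fold b; lra).
  apply Forall_forall. intros c Hc. apply in_map_iff in Hc as (n & <- & Hn).
  unfold Y in Hn. apply In_Y in Hn as (u & Hu & Hn).
  destruct (excluded_middle_informative (u = v)) as [->|Hne].
  - unfold blk in Hn. destruct excluded_middle_informative; [|congruence]. simpl in Hn.
    destruct Hn as [<-|[<-|[]]]; auto.
  - apply (HGu u Hu Hne n Hn).
Qed.
End Y2.


Lemma conv_sub_Rn' p (L0 L : list (Rn p)) cs x : NoDup L -> (forall y, In y L0 -> In y L) -> bary (Rn p) L0 cs x ->
  repr L (ffold L0 cs) x.
Proof.
  intros ND Hsub (Hl & Hpos & Hs & Hx). split; [|split].
  - intros; apply ffold_nonneg; auto.
  - rewrite (sumL_ext _ (fun u => ffold L0 cs u * 1)) by (intros; lra). rewrite ffold_sum, sumC_sumR; auto.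
  - rewrite lc_Rn. subst x. apply functional_extensionality; intros i. rewrite ffold_sum, sumC_Rn; auto.
Qed.

Lemma transport {T U} (L : list T) (L' : list U) (c : T -> R) (c' : U -> R) (phi : T -> U) :
  NoDup L -> NoDup L' -> (forall u v, phi u = phi v -> u = v) ->
  (forall u, In u L -> 0 <= c u) -> (forall y, In y L' -> 0 <= c' y) ->
  (forall u, In u L -> 0 < c u -> In (phi u) L' /\ c' (phi u) = c u) ->
  (forall y, In y L' -> 0 < c' y -> exists u, In u L /\ y = phi u /\ 0 < c u) ->
  forall G, sumL (fun y => c' y * G y) L' = sumL (fun u => c u * G (phi u)) L.
Proof.
  intros N1 N2 Hinj Hc Hc' H1 H2 G.
  set (k := fun y => if excluded_middle_informative (In y L') then c' y * G y else 0).
  rewrite (sumL_ext _ k) by (intros y Hy; unfold k; destruct excluded_middle_informative; tauto).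
  rewrite (sumL_ext (fun u => c u * G (phi u)) (fun u => k (phi u))).
  - rewrite <- (sumL_map k phi L). apply sumL_support; auto.
    + apply FinFun.Injective_map_NoDup; auto.
    + intros y Hy Hn. unfold k. destruct excluded_middle_informative; [|tauto].
      destruct (Rle_lt_or_eq_dec _ _ (Hc' y Hy)) as [Hp|Hp].
      * destruct (H2 y Hy Hp) as (u & Hu & -> & _). exfalso; apply Hn, in_map, Hu.
      * rewrite <- Hp; ring.
    + intros y Hy Hn. unfold k. destruct excluded_middle_informative; tauto.
  - intros u Hu. unfold k. destruct (Rle_lt_or_eq_dec _ _ (Hc u Hu)) as [Hp|Hp].
    + destruct (H1 u Hu Hp) as [Hin Heq]. destruct excluded_middle_informative; [|tauto]. rewrite Heq; auto.
    + rewrite <- Hp. destruct excluded_middle_informative; [|ring].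
      destruct (Rle_lt_or_eq_dec _ _ (Hc' (phi u) i)) as [Hq|Hq].
      * destruct (H2 _ i Hq) as (u' & Hu' & E & Hpos). apply Hinj in E. subst u'. lra.
      * rewrite <- Hq; ring.
Qed.

Ltac solvePC := repeat match goal with
 | H : ~ (_ \/ _) |- _ => apply not_or_and in H
 | H : ~ (_ /\ _) |- _ => apply not_and_or in H
 | H : _ \/ _ |- _ => destruct H
 | H : _ /\ _ |- _ => destruct H
 end; try lra; try tauto.

Section Inv.
Variable p : nat.
Variable w : Rn p -> R.

Definition ind (P : Prop) : R := if excluded_middle_informative P then 1 else 0.

Lemma PC L L' (phi : Rn p -> Rn p) theta u u' :
  w (phi u) = w u + theta -> w (phi u') = w u' + theta ->
  (prec L u' u <-> prec L' (phi u') (phi u)) ->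
  ind (precA w L u' u) = ind (precA w L' (phi u') (phi u)) + IZR (aZ w (phi u') - aZ w u') - IZR (aZ w (phi u) - aZ w u).
Proof.
  intros Hu Hu' Hp. assert (A1 := AR_bounds w u). assert (A2 := AR_bounds w u').
  assert (A3 := AR_bounds w (phi u)). assert (A4 := AR_bounds w (phi u')).
  unfold AR in *. rewrite Hu in A3. rewrite Hu' in A4.
  set (d := (aZ w (phi u) - aZ w u)%Z). set (d' := (aZ w (phi u') - aZ w u')%Z).
  assert (Ed : IZR (aZ w (phi u)) = IZR (aZ w u) + IZR d) by (unfold d; rewrite minus_IZR; ring).
  assert (Ed' : IZR (aZ w (phi u')) = IZR (aZ w u') + IZR d') by (unfold d'; rewrite minus_IZR; ring).
  assert (Hlo : (-1 <= d' - d)%Z) by (apply Zge_of_pred_lt; rewrite minus_IZR; simpl; rewrite Ed, Ed' in *; lra).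
  assert (Hhi : (d' - d <= 1)%Z) by (apply Zle_of_lt_succ; rewrite minus_IZR; simpl; rewrite Ed, Ed' in *; lra).
  unfold ind, precA, AR. rewrite Hu, Hu', Ed, Ed'.
  assert (Hc : (d' - d = -1)%Z \/ (d' - d = 0)%Z \/ (d' - d = 1)%Z) by lia.
  destruct Hc as [Hc|[Hc|Hc]].
  - assert (IZR d' = IZR d - 1) by (replace d' with (d - 1)%Z by lia; rewrite minus_IZR; auto).
    rewrite Ed, Ed' in *. repeat destruct excluded_middle_informative; solvePC.
  - assert (IZR d' = IZR d) by (f_equal; lia).
    rewrite Ed, Ed' in *. repeat destruct excluded_middle_informative; solvePC.
  - assert (IZR d' = IZR d + 1) by (replace d' with (d + 1)%Z by lia; rewrite plus_IZR; auto).
    rewrite Ed, Ed' in *. repeat destruct excluded_middle_informative; solvePC.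
Qed.
End Inv.

Section Inv2.
Variable p : nat.
Variable w : Rn p -> R.
Variables (L L' : list (Rn p)) (c c' : Rn p -> R) (phi : Rn p -> Rn p) (theta : R).
Hypothesis N1 : NoDup L.
Hypothesis N2 : NoDup L'.
Hypothesis Hinj : forall u v, phi u = phi v -> u = v.
Hypothesis Hc : forall u, In u L -> 0 <= c u.
Hypothesis Hc' : forall y, In y L' -> 0 <= c' y.
Hypothesis Hsum : sumL c L = 1.
Hypothesis H1 : forall u, In u L -> 0 < c u -> In (phi u) L' /\ c' (phi u) = c u.
Hypothesis H2 : forall y, In y L' -> 0 < c' y -> exists u, In u L /\ y = phi u /\ 0 < c u.
Hypothesis Hth : forall u, In u L -> 0 < c u -> w (phi u) = w u + theta.
Hypothesis Hord : forall u u', In u L -> In u' L -> 0 < c u -> 0 < c u' ->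
  (prec L u' u <-> prec L' (phi u') (phi u)).

Lemma INV u t (z k : Z) : In u L -> 0 < c u ->
  (CF p w L c t u k <-> CF p w L' c' (t + IZR z) (phi u) (k + z - (aZ w (phi u) - aZ w u))).
Proof.
  intros Hu Hcu. destruct (H1 u Hu Hcu) as [Hin Heq].
  set (D := sumL (fun u' => c u' * IZR (aZ w (phi u') - aZ w u')) L).
  assert (Hh : hsum p w L' c' = hsum p w L c + D).
  { unfold hsum, D. rewrite (transport L L' c c' phi N1 N2 Hinj Hc Hc' H1 H2 (fun y => IZR (aZ w y))).
    rewrite <- sumL_plus. apply sumL_ext. intros u' _. rewrite minus_IZR. ring. }
  assert (HB' : Bm p w L' c' (phi u) = sumL (fun u' => c u' * ind (precA w L' (phi u') (phi u))) L).
  { unfold Bm. rewrite <- (transport L L' c c' phi N1 N2 Hinj Hc Hc' H1 H2 (fun y => ind (precA w L' y (phi u)))).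
    apply sumL_ext. intros y _. unfold ind. destruct excluded_middle_informative; ring. }
  assert (HB : Bm p w L c u = Bm p w L' c' (phi u) + D - IZR (aZ w (phi u) - aZ w u)).
  { rewrite HB'. unfold D. rewrite <- (Rmult_1_l (IZR (aZ w (phi u) - aZ w u))), <- Hsum, <- sumL_scalr.
    rewrite <- sumL_plus, <- sumL_minus. unfold Bm. apply sumL_ext. intros u' Hu'.
    replace (if excluded_middle_informative (precA w L u' u) then c u' else 0) with (c u' * ind (precA w L u' u))
      by (unfold ind; destruct excluded_middle_informative; ring).
    destruct (Rle_lt_or_eq_dec _ _ (Hc u' Hu')) as [Hp|Hp].
    - rewrite (PC p w L L' phi theta u u') by first [apply Hth; auto | apply Hord; auto].
      ring.
    - rewrite <- Hp. ring. }
  unfold CF. rewrite Heq, Hh, HB. rewrite !minus_IZR, !plus_IZR. split; intros (Ha & Hb & Hd); repeat split; lra.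
Qed.
End Inv2.


Lemma ex_min {T} (Rl : T -> T -> Prop) (L : list T) (P : T -> Prop) :
  (forall x, ~ Rl x x) -> (forall x y z, Rl x y -> Rl y z -> Rl x z) ->
  (exists x, In x L /\ P x) -> exists m, In m L /\ P m /\ forall x, In x L -> P x -> ~ Rl x m.
Proof.
  intros Hirr Htr. induction L as [|a L IH]; intros (x & Hx & Px); [contradiction|].
  destruct (classic (exists x, In x L /\ P x)) as [He|Hne].
  - destruct (IH He) as (m & Hm & Pm & Hmin).
    destruct (classic (P a /\ Rl a m)) as [[Pa Ram]|Hn].
    + exists a. split; [simpl; auto|split; auto]. intros y Hy Py Hya. destruct Hy as [Hy|Hy].
      * subst y. apply (Hirr a); auto.
      * apply (Hmin y Hy Py). eapply Htr; eauto.
    + exists m. split; [simpl; auto|split; auto]. intros y Hy Py. destruct Hy as [Hy|Hy]; auto.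
      subst y. intros Hym; apply Hn; auto.
  - exists a. destruct Hx as [Hx|Hx]; [subst x|exfalso; apply Hne; eauto].
    split; [simpl; auto|split; auto]. intros y Hy Py. destruct Hy as [Hy|Hy]; [subst; apply Hirr|].
    exfalso; apply Hne; eauto.
Qed.

Section H6.
Variable p : nat.
Variable w : Rn p -> R.

Lemma base_coords L v l x : NoDup L -> conv (Yverts w L v l) x -> exists c, repr L c (fst x).
Proof.
  intros ND Hx. apply (conv_fun _ _ (NoDup_Y p w L v l ND)) in Hx as [F (Fpos & Fsum & Hx)].
  exists (cY p w L v l F). apply (cY_repr p w L v l F); auto.
Qed.

Lemma hsum_ext L c c' : (forall u, In u L -> c u = c' u) -> hsum p w L c = hsum p w L c'.
Proof. intros H. unfold hsum. apply sumL_ext. intros; rewrite H; auto. Qed.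
Lemma Bm_ext L c c' u : (forall u, In u L -> c u = c' u) -> Bm p w L c u = Bm p w L c' u.
Proof. intros H. unfold Bm. apply sumL_ext. intros; rewrite H; auto. Qed.

Lemma height_bound L v l x c : NoDup L -> In v L -> aff_indep (Rn p) L ->
  conv (Yverts w L v l) x -> repr L c (fst x) ->
  IZR l - 1 <= snd x - hsum p w L c <= IZR l.
Proof.
  intros ND Hv AI Hx Hc. apply (conv_fun _ _ (NoDup_Y p w L v l ND)) in Hx as [F (Fpos & Fsum & Hx)].
  assert (Hr := cY_repr p w L v l F Fpos Fsum x Hx).
  assert (Eq := repr_unique p L _ _ _ AI Hr Hc).
  assert (Ht := cY_height p w L v l F ND Hv Fsum). rewrite <- Hx in Ht.
  rewrite (hsum_ext L c (cY p w L v l F)) by (intros; rewrite Eq; auto).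
  destruct (blk_v_vals p w L v l F Hv Fpos) as (Hmn & Hm & Hn).
  assert (HB := Bm_le_total p w L (cY p w L v l F) v ND Hv (cY_nonneg p w L v l F Fpos)).
  rewrite (cY_sum p w L v l F Fsum) in HB.
  assert (HB0 := Bm_nonneg p w L (cY p w L v l F) v (cY_nonneg p w L v l F Fpos)).
  rewrite Ht. lra.
Qed.

Lemma SYc L v l x c n : NoDup L -> In v L -> aff_indep (Rn p) L ->
  conv (Yverts w L v l) x -> repr L c (fst x) ->
  (SpVt (Yverts w L v l) x n <-> exists u k, In u L /\ n = (u, IZR (aZ w u + k)) /\ CF p w L c (snd x) u k).
Proof.
  intros ND Hv AI Hx Hc. rewrite (SpVt_fun _ _ _ (NoDup_Y p w L v l ND)). split.
  - intros (F & (Fpos & Fsum & HF) & Hn & HFn).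
    destruct (In_Y_form p w L v l n Hn) as (u & k & Hu & -> & _). exists u, k. split; auto; split; auto.
    assert (Hr := cY_repr p w L v l F Fpos Fsum x HF).
    assert (Eq := repr_unique p L _ _ _ AI Hr Hc).
    rewrite (CF_ext p w L c (cY p w L v l F)) by (auto; intros; rewrite Eq; auto).
    apply (S1 p w L v l F ND Hv Fpos Fsum x u k HF Hu). auto.
  - intros (u & k & Hu & -> & HCF).
    apply (conv_fun _ _ (NoDup_Y p w L v l ND)) in Hx as [F (Fpos & Fsum & HF)].
    assert (Hr := cY_repr p w L v l F Fpos Fsum x HF).
    assert (Eq := repr_unique p L _ _ _ AI Hr Hc).
    rewrite (CF_ext p w L c (cY p w L v l F)) in HCF by (auto; intros; rewrite Eq; auto).
    apply (S1 p w L v l F ND Hv Fpos Fsum x u k HF Hu) in HCF as [H1 H2].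
    exists F. split; [split; auto|split; auto].
Qed.

Lemma SpVt_X L b c u : NoDup L -> aff_indep (Rn p) L -> repr L c b -> (SpVt L b u <-> In u L /\ 0 < c u).
Proof.
  intros ND AI Hc. rewrite (SpVt_fun _ _ _ ND). split.
  - intros (f & Hf & Hu & Hfu). split; auto. rewrite <- (repr_unique p L _ _ _ AI Hf Hc u Hu). auto.
  - intros (Hu & Hcu). exists c; auto.
Qed.

Lemma Bm_split L c v q : NoDup L -> In q L -> precA w L q v ->
  (forall u, In u L -> precA w L u v -> ~ precA w L q u) ->
  Bm p w L c v = Bm p w L c q + c q.
Proof.
  intros ND Hq Hqv Hmax. unfold Bm. rewrite <- (sumL_delta L q c ND Hq), <- sumL_plus.
  apply sumL_ext. intros u Hu.
  destruct (excluded_middle_informative (u = q)) as [->|Hne].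
  - destruct excluded_middle_informative; [|tauto]. destruct excluded_middle_informative; [|ring].
    exfalso; eapply precA_irrefl; eauto.
  - destruct (excluded_middle_informative (precA w L u v)) as [H1|H1];
    destruct (excluded_middle_informative (precA w L u q)) as [H2|H2]; try ring.
    + exfalso. destruct (precA_total p w L u q Hu Hq Hne); [tauto|]. eapply Hmax; eauto.
    + exfalso. apply H1. eapply precA_trans; eauto.
Qed.

Lemma Bm_max L c m : NoDup L -> In m L -> (forall u, In u L -> ~ precA w L m u) ->
  Bm p w L c m + c m = sumL c L.
Proof.
  intros ND Hm Hmax. unfold Bm. rewrite <- (sumL_delta L m c ND Hm), <- sumL_plus.
  apply sumL_ext. intros u Hu.
  destruct (excluded_middle_informative (u = m)) as [->|Hne].
  - destruct excluded_middle_informative; [exfalso; eapply precA_irrefl; eauto|ring].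
  - destruct excluded_middle_informative; [ring|]. exfalso.
    destruct (precA_total p w L u m Hu Hm Hne); [tauto|]. eapply Hmax; eauto.
Qed.

Lemma EXV L c f : NoDup L -> (forall u, In u L -> 0 <= c u) -> sumL c L = 1 -> 0 <= f < 1 ->
  exists v, In v L /\ Bm p w L c v <= f < Bm p w L c v + c v.
Proof.
  intros ND Hc Hs Hf.
  assert (Hne : exists x, In x L /\ True).
  { destruct L as [|a L]; [simpl in Hs; lra|]. exists a; simpl; auto. }
  destruct (ex_min (fun a b => precA w L b a) L (fun _ => True)) as (m & Hm & _ & Hmax); auto.
  { intros x; apply precA_irrefl; auto. }
  { intros x y z H1 H2. eapply precA_trans; eauto. }
  assert (Hm1 := Bm_max L c m ND Hm (fun u Hu => Hmax u Hu I)).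
  destruct (ex_min (precA w L) L (fun u => f < Bm p w L c u + c u)) as (v & Hv & Pv & Hvmin); auto.
  { intros x; apply precA_irrefl; auto. }
  { intros x y z H1 H2. eapply precA_trans; eauto. }
  { exists m; split; auto. lra. }
  exists v. split; auto. split; auto.
  destruct (classic (exists q, In q L /\ precA w L q v)) as [Hq|Hq].
  - destruct (ex_min (fun a b => precA w L b a) L (fun q => precA w L q v)) as (q & Hql & Hqv & Hqmax); auto.
    { intros x; apply precA_irrefl; auto. }
    { intros x y z H1 H2. eapply precA_trans; eauto. }
    rewrite (Bm_split L c v q ND Hql Hqv); auto.
    destruct (Rle_or_lt (Bm p w L c q + c q) f) as [H|H]; auto.
    exfalso. apply (Hvmin q Hql H Hqv).
  - unfold Bm. rewrite sumL_zero; [lra|]. intros u Hu. destruct excluded_middle_informative; auto.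
    exfalso; apply Hq; eauto.
Qed.

Lemma ffold_map_inj (S : list (Rn p)) c (phi : Rn p -> Rn p) u :
  NoDup S -> (forall a b, phi a = phi b -> a = b) -> In u S -> ffold (map phi S) (map c S) (phi u) = c u.
Proof.
  induction S as [|s S IH]; intros ND Hinj Hu; [contradiction|]. inversion ND; subst. simpl.
  destruct Hu as [<-|Hu].
  - destruct excluded_middle_informative; [|congruence]. rewrite ffold_out; [ring|].
    intros Hin. apply in_map_iff in Hin as (y & Ey & Hy). apply Hinj in Ey. subst; contradiction.
  - destruct excluded_middle_informative as [E|E]. apply Hinj in E; subst; contradiction.
    rewrite Rplus_0_l. apply IH; auto.
Qed.

Lemma lc_map_Rn (S : list (Rn p)) c (phi : Rn p -> Rn p) :
  lc (Rn p) (map c S) (map phi S) = fun i => sumL (fun u => c u * phi u i) S.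
Proof. induction S as [|a S IH]; [reflexivity|].
  transitivity (vadd (Rn p) (vscale (Rn p) (c a) (phi a)) (lc (Rn p) (map c S) (map phi S))); [reflexivity|].
  rewrite IH. reflexivity. Qed.

Lemma fl_bounds r : IZR (up r - 1) <= r < IZR (up r - 1) + 1.
Proof. destruct (archimed r). rewrite minus_IZR. simpl. lra. Qed.

End H6.


Section Main.
Variables (p : nat) (Lam : Rn p -> Prop) (I : Type) (X : I -> list (Rn p)) (M1 M2 : Z) (w : Rn p -> R).
Hypothesis HOC : ordered_complex (Rn p) p X.
Hypothesis HLC : Lambda_complex (Rn p) Lam X.
Hypothesis HM : (M1 < M2)%Z.
Hypothesis Hw : linear_form p w.

Lemma NDX a : NoDup (X a).
Proof. apply (HOC a). Qed.
Lemma AIX a : aff_indep (Rn p) (X a).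
Proof. apply (HOC a). Qed.

Lemma Yfam_eq (g : Jidx X M1 M2) : Yfam w X M1 M2 g = Yverts w (X (jal g)) (jv g) (jl g).
Proof. reflexivity. Qed.

Lemma common a a' b c c' : repr (X a) c b -> repr (X a') c' b ->
  forall u, In u (X a) -> 0 < c u -> In u (X a') /\ c' u = c u.
Proof.
  intros Hc Hc' u Hu Hcu. destruct HLC as (HX1 & _).
  destruct (HX1 a a') as [Hd|Hi].
  - exfalso. apply (Hd b). split; eapply repr_conv; eauto.
  - destruct (proj1 (Hi b) (conj (repr_conv _ _ _ Hc) (repr_conv _ _ _ Hc'))) as (L0 & HL0 & [cs Hcs]).
    rewrite Forall_forall in HL0.
    assert (R1 := conv_sub_Rn' p L0 (X a) cs b (NDX a) (fun y Hy => proj1 (HL0 y Hy)) Hcs).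
    assert (R2 := conv_sub_Rn' p L0 (X a') cs b (NDX a') (fun y Hy => proj2 (HL0 y Hy)) Hcs).
    assert (E1 := repr_unique p _ _ _ _ (AIX a) Hc R1 u Hu).
    destruct (classic (In u L0)) as [HuL|HuL].
    + split; [apply (HL0 u HuL)|]. rewrite E1. apply (repr_unique p _ _ _ _ (AIX a') Hc' R2 u). apply (HL0 u HuL).
    + rewrite ffold_out in E1 by auto. lra.
Qed.

Lemma hsum_common a a' b c c' : repr (X a) c b -> repr (X a') c' b ->
  hsum p w (X a') c' = hsum p w (X a) c.
Proof.
  intros Hc Hc'. unfold hsum.
  apply (transport (X a) (X a') c c' (fun u => u) (NDX a) (NDX a') (fun u v H => H)
         (proj1 Hc) (proj1 Hc') (common a a' b c c' Hc Hc')).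
  intros y Hy Hp. destruct (common a' a b c' c Hc' Hc y Hy Hp) as [H1 H2]. exists y. split; auto. split; auto. lra.
Qed.

Lemma part1 : ordered_complex (RnR p) (S p) (Yfam w X M1 M2).
Proof.
  intros g. rewrite Yfam_eq. destruct (HOC (jal g)) as (Hl & ND & AI). split; [|split].
  - rewrite length_Y; auto. apply jv_in.
  - apply NoDup_Y; auto.
  - apply aff_indep_Y; auto. apply jv_in.
Qed.

Lemma part3 (g : Jidx X M1 M2) (k : RnR p) : conv (Yfam w X M1 M2 g) k ->
  AR w (jv g) + IZR (jl g) - 1 <= Omega w k <= AR w (jv g) + IZR (jl g).
Proof. rewrite Yfam_eq. apply Omega_bound; auto. apply NDX. apply jv_in. Qed.


Lemma CF_common a a' b c c' t u k : repr (X a) c b -> repr (X a') c' b -> In u (X a) -> 0 < c u ->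
  (CF p w (X a) c t u k <-> CF p w (X a') c' t u k).
Proof.
  intros Hc Hc' Hu Hcu. destruct HLC as (_ & HX2 & _).
  assert (H2 : forall y, In y (X a') -> 0 < c' y -> exists u, In u (X a) /\ y = u /\ 0 < c u).
  { intros y Hy Hp. destruct (common a' a b c' c Hc' Hc y Hy Hp) as [H1 H2]. exists y. repeat split; auto. lra. }
  assert (Hth : forall u, In u (X a) -> 0 < c u -> w u = w u + 0) by (intros; ring).
  assert (Hord : forall u0 u', In u0 (X a) -> In u' (X a) -> 0 < c u0 -> 0 < c u' -> (prec (X a) u' u0 <-> prec (X a') u' u0)).
  { intros. apply HX2; auto; apply (common a a' b c c' Hc Hc'); auto. }
  rewrite (INV p w (X a) (X a') c c' (fun u => u) 0 (NDX a) (NDX a') (fun u v H => H) (proj1 Hc) (proj1 Hc')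
    (proj1 (proj2 Hc)) (common a a' b c c' Hc Hc') H2 Hth Hord u t 0 k Hu Hcu).
  rewrite Rplus_0_r. replace (k + 0 - (aZ w u - aZ w u))%Z with k by lia. tauto.
Qed.

Lemma SpVt_In {E : RVS} (L : list E) x n : SpVt L x n -> In n L.
Proof. intros (cs & i & c & _ & Hn & _). eapply nth_error_In; eauto. Qed.

Lemma LC1_dir (g g' : Jidx X M1 M2) x : conv (Yfam w X M1 M2 g) x -> conv (Yfam w X M1 M2 g') x ->
  forall n, SpVt (Yfam w X M1 M2 g) x n -> In n (Yfam w X M1 M2 g').
Proof.
  rewrite !Yfam_eq. intros Hx Hx' n Hn.
  destruct (base_coords p w _ _ _ x (NDX _) Hx) as [c Hc].
  destruct (base_coords p w _ _ _ x (NDX _) Hx') as [c' Hc'].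
  rewrite (SYc p w _ _ _ x c n (NDX _) (jv_in _ _ _ g) (AIX _) Hx Hc) in Hn.
  destruct Hn as (u & k & Hu & -> & HCF).
  assert (Hcu : 0 < c u) by apply HCF.
  destruct (common _ _ _ c c' Hc Hc' u Hu Hcu) as [Hu' _].
  apply (SpVt_In _ x).
  rewrite (SYc p w _ _ _ x c' _ (NDX _) (jv_in _ _ _ g') (AIX _) Hx' Hc').
  exists u, k. split; auto. split; auto. rewrite <- (CF_common _ _ _ c c' _ _ _ Hc Hc' Hu Hcu). auto.
Qed.

Lemma LC1 (g g' : Jidx X M1 M2) x : (conv (Yfam w X M1 M2 g) x /\ conv (Yfam w X M1 M2 g') x) <->
  convP (RnR p) (fun v => In v (Yfam w X M1 M2 g) /\ In v (Yfam w X M1 M2 g')) x.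
Proof.
  split.
  - intros [Hx Hx']. assert (ND : NoDup (Yfam w X M1 M2 g)) by (rewrite Yfam_eq; apply NoDup_Y, NDX).
    assert (Hx0 := Hx). apply (conv_fun _ _ ND) in Hx0 as [F (Fpos & Fsum & HF)].
    set (L0 := filter (fun n => EMb (0 < F n)) (Yfam w X M1 M2 g)).
    exists L0. split.
    + apply Forall_forall. intros n Hn. unfold L0 in Hn. apply filter_In in Hn as [Hn Hp]. apply (proj1 (EMb_true _)) in Hp.
      split; auto. apply (LC1_dir g g' x Hx Hx').
      apply (SpVt_fun _ _ _ ND). exists F. split; [split; auto|split; auto].
    + apply repr_conv with (f := F). split; [|split].
      * intros n Hn. unfold L0 in Hn. apply filter_In in Hn as [Hn _]. auto.
      * rewrite <- Fsum. symmetry. apply sumL_filter. intros n Hn Hp. specialize (Fpos n Hn). lra.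
      * rewrite HF, !lc_RnR. f_equal.
        -- apply functional_extensionality; intros i. apply sumL_filter. intros n Hn Hp. specialize (Fpos n Hn).
           replace (F n) with 0 by lra. ring.
        -- apply sumL_filter. intros n Hn Hp. specialize (Fpos n Hn). replace (F n) with 0 by lra. ring.
  - intros (L0 & HL0 & Hx). rewrite Forall_forall in HL0. split.
    + eapply conv_sub_RnR; [rewrite Yfam_eq; apply NoDup_Y, NDX| |exact Hx]. intros y Hy; apply HL0; auto.
    + eapply conv_sub_RnR; [rewrite Yfam_eq; apply NoDup_Y, NDX| |exact Hx]. intros y Hy; apply HL0; auto.
Qed.


Lemma In_Yfam_fst (g : Jidx X M1 M2) n : In n (Yfam w X M1 M2 g) -> In (fst n) (X (jal g)).
Proof. rewrite Yfam_eq. intros H. destruct (In_Y_form p w _ _ _ n H) as (u & k & Hu & -> & _). auto. Qed.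

Lemma LC2 (g g' : Jidx X M1 M2) n n' : In n (Yfam w X M1 M2 g) -> In n' (Yfam w X M1 M2 g) ->
  In n (Yfam w X M1 M2 g') -> In n' (Yfam w X M1 M2 g') ->
  (prec (Yfam w X M1 M2 g) n n' <-> prec (Yfam w X M1 M2 g') n n').
Proof.
  intros H1 H2 H3 H4. destruct HLC as (_ & HX2 & _).
  assert (E := HX2 (jal g) (jal g') (fst n) (fst n') (In_Yfam_fst g n H1) (In_Yfam_fst g n' H2)
     (In_Yfam_fst g' n H3) (In_Yfam_fst g' n' H4)).
  rewrite !Yfam_eq in *. rewrite !PY by apply NDX. tauto.
Qed.

Lemma vadd_cancel (x y l : Rn p) : vadd (Rn p) x l = vadd (Rn p) y l -> x = y.
Proof. intros H. apply functional_extensionality; intros i. assert (E := f_equal (fun h => h i) H). simpl in E. lra. Qed.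

Lemma LC3 (g g' : Jidx X M1 M2) n n' l : LamHat Lam M1 M2 l ->
  In n (Yfam w X M1 M2 g) -> In n' (Yfam w X M1 M2 g) ->
  In (vadd (RnR p) n l) (Yfam w X M1 M2 g') -> In (vadd (RnR p) n' l) (Yfam w X M1 M2 g') ->
  (prec (Yfam w X M1 M2 g) n n' <-> prec (Yfam w X M1 M2 g') (vadd (RnR p) n l) (vadd (RnR p) n' l)).
Proof.
  intros [Hl _] H1 H2 H3 H4. destruct HLC as (_ & _ & HX3 & _).
  assert (H3' := In_Yfam_fst g' _ H3). assert (H4' := In_Yfam_fst g' _ H4).
  change (fst (vadd (RnR p) n l)) with (vadd (Rn p) (fst n) (fst l)) in H3'.
  change (fst (vadd (RnR p) n' l)) with (vadd (Rn p) (fst n') (fst l)) in H4'.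
  assert (E := HX3 (jal g) (jal g') (fst n) (fst n') (fst l) Hl (In_Yfam_fst g n H1) (In_Yfam_fst g n' H2) H3' H4').
  rewrite !Yfam_eq in *. rewrite !PY by apply NDX.
  change (fst (vadd (RnR p) n l)) with (vadd (Rn p) (fst n) (fst l)).
  change (fst (vadd (RnR p) n' l)) with (vadd (Rn p) (fst n') (fst l)).
  change (snd (vadd (RnR p) n l)) with (snd n + snd l).
  change (snd (vadd (RnR p) n' l)) with (snd n' + snd l).
  split.
  - intros (_ & _ & [Hp|[He Hs]]); split; auto; split; auto.
    + left; apply E; auto.
    + right; split; [rewrite He; auto|lra].
  - intros (_ & _ & [Hp|[He Hs]]); split; auto; split; auto.
    + left; apply E; auto.
    + right; split; [eapply vadd_cancel; eauto|lra].
Qed.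


Lemma LC4a (y : RnR p) : exists x l, inX (RnR p) (Yfam w X M1 M2) x /\ LamHat Lam M1 M2 l /\ y = vadd (RnR p) x l.
Proof.
  destruct y as [y1 t]. destruct HLC as (_ & _ & _ & HX4 & _).
  destruct (HX4 y1) as (x0 & lam & (a & Hx0) & Hlam & Hy).
  apply (conv_fun _ _ (NDX a)) in Hx0 as [c Hc]. destruct Hc as (Hcpos & Hcs & Hcx).
  set (N := (M2 - M1)%Z). assert (HN : 0 < IZR N) by (apply IZR_lt; unfold N; lia).
  set (s := t - hsum p w (X a) c).
  set (r := (s - IZR M1 + 1) / IZR N).
  set (z := (up r - 1)%Z). assert (Hz := fl_bounds r). fold z in Hz.
  assert (Er : s - IZR M1 + 1 = r * IZR N) by (unfold r; field; lra).
  set (s' := s - IZR N * IZR z).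
  assert (Hs'1 : IZR M1 - 1 <= s') by (unfold s'; nra).
  assert (Hs'2 : s' < IZR M2 - 1).
  { assert (IZR N = IZR M2 - IZR M1) by (unfold N; rewrite minus_IZR; auto). unfold s'; nra. }
  set (l := up s'). destruct (archimed s') as [Hl1 Hl2]. fold l in Hl1, Hl2.
  assert (Hlr : (M1 <= l < M2)%Z).
  { split. apply Zge_of_pred_lt; lra. apply lt_IZR; lra. }
  set (f := s' - (IZR l - 1)).
  destruct (EXV p w (X a) c f (NDX a) Hcpos Hcs) as (v & Hv & HB); [unfold f; lra|].
  set (B := Bm p w (X a) c v).
  set (F := fun n : RnR p => if excluded_middle_informative (fst n = v) then
              (if excluded_middle_informative (snd n = IZR (aZ w v + l)) then f - B else c v - (f - B))
            else c (fst n)).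
  assert (Hlo : IZR (aZ w v + l - 1) <> IZR (aZ w v + l)) by (intros E; apply eq_IZR in E; lia).
  assert (Hblk : forall u, In u (X a) -> sumL F (blk p w (X a) v l u) = c u).
  { intros u Hu. unfold blk, F, hiv, lov. destruct (excluded_middle_informative (u = v)) as [->|Hne]; simpl.
    - repeat (destruct excluded_middle_informative; try congruence; try (exfalso; apply Hlo; assumption)); ring.
    - repeat (destruct excluded_middle_informative; simpl; try congruence); ring. }
  set (Yv := Yverts w (X a) v l).
  assert (Fpos : forall n, In n Yv -> 0 <= F n).
  { intros n Hn. apply In_Y in Hn as (u & Hu & Hn). unfold blk, hiv, lov in Hn. unfold F.
    destruct (excluded_middle_informative (u = v)) as [->|Hne].
    - simpl in Hn. destruct Hn as [<-|[<-|[]]]; simpl.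
      + destruct excluded_middle_informative; [|congruence]. destruct excluded_middle_informative; [|congruence]. unfold B; lra.
      + destruct excluded_middle_informative; [|congruence]. destruct excluded_middle_informative; [contradiction|]. unfold B; lra.
    - destruct excluded_middle_informative; simpl in Hn; destruct Hn as [<-|[]]; simpl;
        (destruct excluded_middle_informative; [contradiction|]); auto. }
  assert (Fsum : sumL F Yv = 1).
  { unfold Yv. rewrite Yverts_eq, sumL_flat_map. rewrite <- Hcs. apply sumL_ext. auto. }
  set (kp := lc (RnR p) (map F Yv) Yv).
  assert (EcY : forall u, In u (X a) -> cY p w (X a) v l F u = c u) by (intros; unfold cY; auto).
  assert (Hk1 : fst kp = x0).
  { unfold kp, Yv. rewrite cY_base, Hcx. f_equal. apply map_ext_in. auto. }
  assert (Hk2 : snd kp = t - IZR N * IZR z).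
  { unfold kp, Yv. rewrite (cY_height p w (X a) v l F (NDX a) Hv Fsum).
    rewrite (hsum_ext p w (X a) _ c EcY), (Bm_ext p w (X a) _ c v EcY). fold B.
    unfold F, hiv; simpl. destruct excluded_middle_informative; [|congruence].
    destruct excluded_middle_informative; [|congruence]. unfold f, s', s. ring. }
  exists kp, (lam, IZR (N * z)). split; [|split].
  - exists {| jal := a; jv := v; jl := l; jv_in := Hv; jl_range := Hlr |}.
    rewrite Yfam_eq. simpl. apply repr_conv with (f := F). split; [auto|split; auto].
  - split; auto. exists z. auto.
  - destruct kp as [k1 k2]. simpl in Hk1, Hk2. subst k1. rewrite Hy.
    change (vadd (RnR p) (x0, k2) (lam, IZR (N * z))) with (vadd (Rn p) x0 lam, k2 + IZR (N * z)).
    apply (f_equal2 pair); [reflexivity|]. rewrite mult_IZR, Hk2. ring.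
Qed.


Lemma int_proj (g : Jidx X M1 M2) x : Defs.interior (RnR p) (Yfam w X M1 M2 g) x ->
  conv (Yfam w X M1 M2 g) x /\ Defs.interior (Rn p) (X (jal g)) (fst x) /\
  exists e, 0 < e /\ conv (Yfam w X M1 M2 g) (fst x, snd x + e) /\ conv (Yfam w X M1 M2 g) (fst x, snd x - e).
Proof.
  intros (e & He & H). split; [|split].
  - apply H. simpl. split; [intros i|]; rewrite Rminus_diag, Rabs_R0; auto.
  - exists e. split; auto. intros b' Hb'.
    assert (Hc : conv (Yfam w X M1 M2 g) (b', snd x)).
    { apply H. simpl. split; auto. rewrite Rminus_diag, Rabs_R0; auto. }
    rewrite Yfam_eq in Hc. destruct (base_coords p w _ _ _ _ (NDX _) Hc) as [c Hc'].
    eapply repr_conv; eauto.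
  - exists (e / 2). split; [lra|split]; apply H; simpl; (split; [intros i; rewrite Rminus_diag, Rabs_R0; auto|]).
    + replace (snd x - (snd x + e / 2)) with (- (e/2)) by ring. rewrite Rabs_Ropp, Rabs_pos_eq; lra.
    + replace (snd x - (snd x - e / 2)) with (e/2) by ring. rewrite Rabs_pos_eq; lra.
Qed.

Lemma int_strict (g : Jidx X M1 M2) x c : Defs.interior (RnR p) (Yfam w X M1 M2 g) x -> repr (X (jal g)) c (fst x) ->
  IZR M1 - 1 < snd x - hsum p w (X (jal g)) c < IZR M2 - 1.
Proof.
  intros Hi Hc. destruct (int_proj g x Hi) as (_ & _ & e & He & H1 & H2). rewrite Yfam_eq in H1, H2.
  assert (B1 := height_bound p w _ _ _ _ c (NDX _) (jv_in _ _ _ g) (AIX _) H1 Hc).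
  assert (B2 := height_bound p w _ _ _ _ c (NDX _) (jv_in _ _ _ g) (AIX _) H2 Hc).
  simpl in B1, B2. destruct (jl_range _ _ _ g) as [R1 R2].
  apply IZR_le in R1. assert (R3 : IZR (jl g + 1) <= IZR M2) by (apply IZR_le; lia). rewrite plus_IZR in R3.
  split; lra.
Qed.

Lemma LC4b (g g' : Jidx X M1 M2) x y l : Defs.interior (RnR p) (Yfam w X M1 M2 g) x -> Defs.interior (RnR p) (Yfam w X M1 M2 g') y ->
  LamHat Lam M1 M2 l -> y = vadd (RnR p) x l -> y = x.
Proof.
  intros Hx Hy [Hl [z Hz]] Hyx. destruct HLC as (_ & _ & _ & _ & HX5 & _).
  destruct (int_proj g x Hx) as (Cx & Ix & _). destruct (int_proj g' y Hy) as (Cy & Iy & _).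
  assert (E1 : fst y = vadd (Rn p) (fst x) (fst l)) by (rewrite Hyx; reflexivity).
  assert (E2 : snd y = snd x + snd l) by (rewrite Hyx; reflexivity).
  assert (Ef := HX5 _ _ _ _ _ Ix Iy Hl E1).
  rewrite Yfam_eq in Cx, Cy.
  destruct (base_coords p w _ _ _ _ (NDX _) Cx) as [c Hc].
  destruct (base_coords p w _ _ _ _ (NDX _) Cy) as [c' Hc'].
  assert (S1 := int_strict g x c Hx Hc). assert (S2 := int_strict g' y c' Hy Hc').
  rewrite Ef in Hc'. rewrite (hsum_common _ _ _ c c' Hc Hc') in S2.
  rewrite E2, Hz, mult_IZR in S2.
  assert (HN : 0 < IZR (M2 - M1)) by (apply IZR_lt; lia). rewrite minus_IZR in HN.
  assert (Hz0 : z = 0%Z).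
  { assert (-1 < IZR z < 1).
    { rewrite minus_IZR in S2. split; nra. }
    assert (A1 : (-1 < z)%Z) by (apply lt_IZR; simpl; lra).
    assert (A2 : (z < 1)%Z) by (apply lt_IZR; simpl; lra). lia. }
  subst z. destruct x as [x1 x2], y as [y1 y2]. simpl in *. rewrite Ef, E2, Hz. apply (f_equal2 pair); [reflexivity|]. rewrite Z.mul_0_r. simpl. ring.
Qed.


Lemma LC6 (g g' : Jidx X M1 M2) x x' l : conv (Yfam w X M1 M2 g) x -> conv (Yfam w X M1 M2 g') x' ->
  LamHat Lam M1 M2 l -> x' = vadd (RnR p) x l ->
  forall n', SpVt (Yfam w X M1 M2 g') x' n' <-> exists n, SpVt (Yfam w X M1 M2 g) x n /\ n' = vadd (RnR p) n l.
Proof.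
  destruct l as [lam sl]. intros Hx Hx' [Hl [z Hz]] Hxx'. simpl in Hl, Hz.
  destruct HLC as (_ & _ & HX3 & _ & _ & HX6).
  rewrite !Yfam_eq in *. set (a := jal g) in *. set (a' := jal g') in *.
  set (Z0 := ((M2 - M1) * z)%Z) in *.
  destruct (base_coords p w _ _ _ _ (NDX _) Hx) as [c Hc].
  destruct (base_coords p w _ _ _ _ (NDX _) Hx') as [c' Hc'].
  assert (E1 : fst x' = vadd (Rn p) (fst x) lam) by (rewrite Hxx'; reflexivity).
  assert (E2 : snd x' = snd x + IZR Z0) by (rewrite Hxx', <- Hz; reflexivity).
  set (phi := fun u => vadd (Rn p) u lam).
  assert (Hinj : forall u v, phi u = phi v -> u = v) by (intros u v; apply vadd_cancel).
  assert (HS := HX6 a a' (fst x) (fst x') lam (repr_conv _ _ _ Hc) (repr_conv _ _ _ Hc') Hl E1).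
  assert (SX := fun u => SpVt_X p (X a) (fst x) c u (NDX a) (AIX a) Hc).
  assert (SX' := fun u => SpVt_X p (X a') (fst x') c' u (NDX a') (AIX a') Hc').
  assert (H2 : forall y, In y (X a') -> 0 < c' y -> exists u, In u (X a) /\ y = phi u /\ 0 < c u).
  { intros y Hy Hp. destruct (proj1 (HS y) (proj2 (SX' y) (conj Hy Hp))) as (u & Hu & ->).
    apply SX in Hu. exists u. tauto. }
  assert (H1in : forall u, In u (X a) -> 0 < c u -> In (phi u) (X a')).
  { intros u Hu Hp. apply (proj1 (SX' (phi u))). apply HS. exists u. split; auto. apply SX; auto. }
  assert (H1 : forall u, In u (X a) -> 0 < c u -> In (phi u) (X a') /\ c' (phi u) = c u).
  { intros u Hu Hp. split; [auto|].
    set (S := filter (fun u => EMb (0 < c u)) (X a)).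
    assert (HSi : forall u, In u S <-> In u (X a) /\ 0 < c u).
    { intros y. unfold S. rewrite filter_In. split; intros [A B]; split; auto.
      apply (proj1 (EMb_true _)); auto. apply (proj2 (EMb_true _)); auto. }
    assert (NS : NoDup S) by (apply NoDup_filter, NDX).
    assert (Hbary : bary (Rn p) (map phi S) (map c S) (fst x')).
    { split; [rewrite !length_map; auto|split; [|split]].
      - apply Forall_forall. intros r Hr. apply in_map_iff in Hr as (y & <- & Hy). apply HSi in Hy. lra.
      - rewrite sumR_map. assert (Hs := proj1 (proj2 Hc)). rewrite <- Hs. symmetry. apply sumL_filter.
        intros y Hy Hn. assert (0 <= c y) by (apply (proj1 Hc); auto). lra.
      - rewrite lc_map_Rn, E1. assert (Hs := proj1 (proj2 Hc)). assert (Hb := proj2 (proj2 Hc)). apply functional_extensionality; intros i.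
        unfold phi. simpl.
        rewrite (sumL_ext _ (fun u => c u * u i + c u * lam i)) by (intros; ring).
        rewrite sumL_plus, sumL_scalr.
        replace (sumL c S) with 1.
        2:{ rewrite <- Hs. apply sumL_filter. intros y Hy Hn. assert (0 <= c y) by (apply (proj1 Hc); auto). lra. }
        assert (Hbi : fst x i = sumL (fun u0 : Rn p => c u0 * u0 i) (X a)).
        { change (fst x i = (fun j => sumL (fun u0 : Rn p => c u0 * u0 j) (X a)) i). rewrite <- lc_Rn. rewrite <- Hb. reflexivity. }
        assert (Hf : sumL (fun u0 : Rn p => c u0 * u0 i) (X a) = sumL (fun u0 : Rn p => c u0 * u0 i) S).
        { apply sumL_filter. intros y Hy Hn. assert (0 <= c y) by (apply (proj1 Hc); auto).
          replace (c y) with 0 by lra. ring. }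
        rewrite Hbi, Hf. ring. }
    assert (Hr := conv_sub_Rn' p (map phi S) (X a') (map c S) (fst x') (NDX a')).
    assert (Hsub : forall y, In y (map phi S) -> In y (X a')).
    { intros y Hy. apply in_map_iff in Hy as (u' & <- & Hu'). apply HSi in Hu'. apply H1in; tauto. }
    specialize (Hr Hsub Hbary).
    rewrite (repr_unique p _ _ _ _ (AIX a') Hc' Hr (phi u) (H1in u Hu Hp)).
    apply ffold_map_inj; auto. apply HSi; auto. }
  assert (Hth : forall u, In u (X a) -> 0 < c u -> w (phi u) = w u + w lam).
  { intros u _ _. unfold phi. apply (proj1 Hw). }
  assert (Hord : forall u0 u', In u0 (X a) -> In u' (X a) -> 0 < c u0 -> 0 < c u' ->
     (prec (X a) u' u0 <-> prec (X a') (phi u') (phi u0))).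
  { intros u0 u' Hu0 Hu' Hc0 Hc1. apply HX3; auto; apply H1in; auto. }
  assert (HI := INV p w (X a) (X a') c c' phi (w lam) (NDX a) (NDX a') Hinj (proj1 Hc) (proj1 Hc')
    (proj1 (proj2 Hc)) H1 H2 Hth Hord).
  intros n'. rewrite (SYc p w (X a') (jv g') (jl g') x' c' n' (NDX a') (jv_in _ _ _ g') (AIX a') Hx' Hc'). split.
  - intros (u' & k' & Hu' & -> & HCF). assert (Hcp : 0 < c' u') by apply HCF.
    destruct (H2 u' Hu' Hcp) as (u & Hu & -> & Hcu).
    set (k := (k' - Z0 + (aZ w (phi u) - aZ w u))%Z).
    exists (u, IZR (aZ w u + k)). split.
    + rewrite (SYc p w (X a) (jv g) (jl g) x c _ (NDX a) (jv_in _ _ _ g) (AIX a) Hx Hc).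
      exists u, k. split; auto. split; auto.
      rewrite (HI u (snd x) Z0 k Hu Hcu). rewrite <- E2. replace (k + Z0 - (aZ w (phi u) - aZ w u))%Z with k' by (unfold k; lia). auto.
    + change (vadd (RnR p) (u, IZR (aZ w u + k)) (lam, sl)) with (phi u, IZR (aZ w u + k) + sl).
      apply (f_equal2 pair); [reflexivity|]. rewrite Hz, <- plus_IZR. f_equal. unfold k. lia.
  - intros (n & Hn & ->).
    rewrite (SYc p w (X a) (jv g) (jl g) x c _ (NDX a) (jv_in _ _ _ g) (AIX a) Hx Hc) in Hn.
    destruct Hn as (u & k & Hu & -> & HCF). assert (Hcu : 0 < c u) by apply HCF.
    set (k' := (k + Z0 - (aZ w (phi u) - aZ w u))%Z).
    exists (phi u), k'. split; [apply H1in; auto|split].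
    + change (vadd (RnR p) (u, IZR (aZ w u + k)) (lam, sl)) with (phi u, IZR (aZ w u + k) + sl).
      apply (f_equal2 pair); [reflexivity|]. rewrite Hz, <- plus_IZR. f_equal. unfold k'. lia.
    + rewrite E2. apply (HI u (snd x) Z0 k Hu Hcu). auto.
Qed.

End Main.


Theorem proposition1 (p : nat) (Lam : Rn p -> Prop) (I : Type) (X : I -> list (Rn p))
  (M1 M2 : Z) (w : Rn p -> R) :
  full_lattice p Lam ->
  ordered_complex (Rn p) p X ->
  Lambda_complex (Rn p) Lam X ->
  (M1 < M2)%Z ->
  linear_form p w ->
  ordered_complex (RnR p) (S p) (Yfam w X M1 M2) /\
  Lambda_complex (RnR p) (LamHat Lam M1 M2) (Yfam w X M1 M2) /\
  (forall (g : Jidx X M1 M2) (k : RnR p), conv (Yfam w X M1 M2 g) k ->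
     AR w (jv g) + IZR (jl g) - 1 <= Omega w k <= AR w (jv g) + IZR (jl g)).
Proof.
  intros _ HOC HLC HM Hw. split; [|split].
  - eapply part1; eauto.
  - split; [|split; [|split; [|split; [|split]]]].
    + intros a b. right. intros x. eapply LC1; eauto.
    + intros a b v w' H1 H2 H3 H4. eapply LC2; eauto.
    + intros a a' v w' l Hl H1 H2 H3 H4. eapply LC3; eauto.
    + intros y. eapply LC4a; eauto.
    + intros a b x y l H1 H2 H3 H4. eapply LC4b; eauto.
    + intros a a' x x' l H1 H2 H3 H4. eapply LC6; eauto.
  - intros g k Hk. eapply part3; eauto.
Qed.
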